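(* Let $\Omega\subset\mathbb{C}$ be a simply connected domain and let $(h,\mathcal{M},\mathcal{N})$ be a Weierstrass data of the second kind on $\Omega$. Define $g:=\frac{1}{h}$ and $\mathcal{P}:=\frac12\mathcal{N}$. Then there exists a $\mathcal{C}^2$ function $\mathcal{Q}:\Omega\to\mathbb{R}$ such that $$\mathcal{Q}_z=h\,\mathcal{M}_z-\frac{h^2}{2}\,\mathcal{N}_z .$$ Moreover, for any such $\mathcal{Q}$, the triple $(g,\mathcal{P},\mathcal{Q})$ is a Weierstrass data of the first kind on $\Omega$, and $$\frac{1}{\overline g}\left(\mathcal{P}_z-|g|^2\mathcal{Q}_z\right)=-\left(\mathcal{M}_z-(\mathrm{Re}\,h)\,\mathcal{N}_z\right).$$
   Context: $\Omega\subset\mathbb{R}^2\equiv\mathbb{C}$ has complex coordinate $z=u+iv$, and $\partial_z=\frac12(\partial_u-i\partial_v)$, $\partial_{\overline z}=\frac12(\partial_u+i\partial_v)$; subscripts denote partial derivatives. A Weierstrass data of the first kind on $\Omega$ is a triple $(g,\mathcal{P},\mathcal{Q})$ where $g:\Omega\to\mathbb{C}\setminus\{0\}$ and $\mathcal{P},\mathcal{Q}:\Omega\to\mathbb{R}$ are $\mathcal{C}^2$, satisfying $g_{\overline z}=0$, $\mathcal{P}_{z\overline z}=|g|^2\mathcal{Q}_{z\overline z}$, and $\mathcal{P}_z-|g|^2\mathcal{Q}_z\neq0$ at every point of $\Omega$. A Weierstrass data of the second kind on $\Omega$ is a triple $(h,\mathcal{M},\mathcal{N})$ where $h:\Omega\to\mathbb{C}\setminus\{0\}$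 and $\mathcal{M},\mathcal{N}:\Omega\to\mathbb{R}$ are $\mathcal{C}^2$, satisfying $h_{\overline z}=0$, $\mathcal{M}_{z\overline z}=(\mathrm{Re}\,h)\,\mathcal{N}_{z\overline z}$, and $\mathcal{M}_z-(\mathrm{Re}\,h)\,\mathcal{N}_z\neq0$ at every point of $\Omega$. *)

(* Defs.v *)
From Stdlib Require Import Reals.
From Coquelicot Require Import Coquelicot.

Open Scope R_scope.

Definition pu (f : C -> R) (z : C) : R := Derive (fun t => f (t, snd z)) (fst z).
Definition pv (f : C -> R) (z : C) : R := Derive (fun t => f (fst z, t)) (snd z).

Definition C2_on_R (Omega : C -> Prop) (f : C -> R) : Prop :=
  forall z, Omega z ->
    ex_derive (fun t => f (t, snd z)) (fst z) /\
    ex_derive (fun t => f (fst z, t)) (snd z) /\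
    ex_derive (fun t => pu f (t, snd z)) (fst z) /\
    ex_derive (fun t => pu f (fst z, t)) (snd z) /\
    ex_derive (fun t => pv f (t, snd z)) (fst z) /\
    ex_derive (fun t => pv f (fst z, t)) (snd z) /\
    continuous f z /\ continuous (pu f) z /\ continuous (pv f) z /\
    continuous (pu (pu f)) z /\ continuous (pv (pu f)) z /\
    continuous (pu (pv f)) z /\ continuous (pv (pv f)) z.

Definition C2_on_C (Omega : C -> Prop) (F : C -> C) : Prop :=
  C2_on_R Omega (fun z => Re (F z)) /\ C2_on_R Omega (fun z => Im (F z)).

Open Scope C_scope.

Definition Cpu (F : C -> C) (z : C) : C :=
  (pu (fun w => Re (F w)) z, pu (fun w => Im (F w)) z).
Definition Cpv (F : C -> C) (z : C) : C :=
  (pv (fun w => Re (F w)) z, pv (fun w => Im (F w)) z).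

Definition dz (F : C -> C) (z : C) : C := / 2 * (Cpu F z - Ci * Cpv F z).
Definition dzb (F : C -> C) (z : C) : C := / 2 * (Cpu F z + Ci * Cpv F z).

Definition toC (f : C -> R) : C -> C := fun z => RtoC (f z).

Definition continuous_on {T U : UniformSpace} (D : T -> Prop) (f : T -> U) : Prop :=
  forall x, D x -> filterlim f (within D (locally x)) (locally (f x)).

Definition unit_interval (t : R) : Prop := (0 <= t <= 1)%R.
Definition unit_square (p : R * R) : Prop :=
  unit_interval (fst p) /\ unit_interval (snd p).

Definition is_domain (Omega : C -> Prop) : Prop :=
  (exists z, Omega z) /\ open Omega /\
  forall a b, Omega a -> Omega b ->
    exists gamma : R -> C,
      continuous_on unit_interval gamma /\
      (forall t, unit_interval t -> Omega (gamma t)) /\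
      gamma 0%R = a /\ gamma 1%R = b.

(** Simply connected domain: a domain in which every closed loop is
    (freely) homotopic within Omega to a constant loop. *)
Definition simply_connected_domain (Omega : C -> Prop) : Prop :=
  is_domain Omega /\
  forall gamma : R -> C,
    continuous_on unit_interval gamma ->
    (forall t, unit_interval t -> Omega (gamma t)) ->
    gamma 0%R = gamma 1%R ->
    exists H : R * R -> C,
      continuous_on unit_square H /\
      (forall p, unit_square p -> Omega (H p)) /\
      (forall t, unit_interval t -> H (0%R, t) = gamma t) /\
      (forall t, unit_interval t -> H (1%R, t) = H (1%R, 0%R)) /\
      (forall s, unit_interval s -> H (s, 0%R) = H (s, 1%R)).

Definition WD_first (Omega : C -> Prop) (g : C -> C) (P Q : C -> R) : Prop :=
  C2_on_C Omega g /\ C2_on_R Omega P /\ C2_on_R Omega Q /\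
  forall z, Omega z ->
    g z <> 0 /\
    dzb g z = 0 /\
    dzb (dz (toC P)) z = RtoC (Cmod (g z) ^ 2) * dzb (dz (toC Q)) z /\
    dz (toC P) z - RtoC (Cmod (g z) ^ 2) * dz (toC Q) z <> 0.

Definition WD_second (Omega : C -> Prop) (h : C -> C) (M N : C -> R) : Prop :=
  C2_on_C Omega h /\ C2_on_R Omega M /\ C2_on_R Omega N /\
  forall z, Omega z ->
    h z <> 0 /\
    dzb h z = 0 /\
    dzb (dz (toC M)) z = RtoC (Re (h z)) * dzb (dz (toC N)) z /\
    dz (toC M) z - RtoC (Re (h z)) * dz (toC N) z <> 0.

(* Main.v *)
Require Import Defs.
From Stdlib Require Import Reals Lra.
From Coquelicot Require Import Coquelicot.
From Stdlib Require Import ClassicalEpsilon Classical.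
Open Scope R_scope.

Open Scope R_scope.

Definition sq (c : C) (r : R) (z : C) : Prop :=
  Rabs (fst z - fst c) < r /\ Rabs (snd z - snd c) < r.

Lemma ball_sq (c z : C) (r : R) : ball c r z <-> sq c r z.
Proof. unfold sq. split; intros [H1 H2]; split; assumption. Qed.

Lemma ballR (x y : R) (e : R) : ball x e y <-> Rabs (y - x) < e.
Proof. split; intro H; exact H. Qed.

Lemma cont_C_elim (f : C -> R) z : continuous f z ->
  forall eps : posreal, exists d : posreal, forall w,
    Rabs (fst w - fst z) < d -> Rabs (snd w - snd z) < d -> Rabs (f w - f z) < eps.
Proof.
  intros Hc eps. destruct (Hc (ball (f z) eps) (locally_ball _ eps)) as [d Hd].
  exists d. intros w H1 H2. apply Hd. split; assumption.
Qed.

Lemma cont_C_intro (f : C -> R) z :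
  (forall eps : posreal, exists d : posreal, forall w,
    Rabs (fst w - fst z) < d -> Rabs (snd w - snd z) < d -> Rabs (f w - f z) < eps) ->
  continuous f z.
Proof.
  intros H P [eps HP]. destruct (H eps) as [d Hd]. exists d.
  intros w [H1 H2]. apply HP. apply Hd; assumption.
Qed.

Lemma cont_R_intro (f : R -> R) x :
  (forall eps : posreal, exists d : posreal, forall y,
    Rabs (y - x) < d -> Rabs (f y - f x) < eps) -> continuous f x.
Proof.
  intros H P [eps HP]. destruct (H eps) as [d Hd]. exists d.
  intros y Hy. apply HP. apply Hd; assumption.
Qed.

Lemma cont_R_elim (f : R -> R) x : continuous f x ->
  forall eps : posreal, exists d : posreal, forall y,
    Rabs (y - x) < d -> Rabs (f y - f x) < eps.
Proof.
  intros Hc eps. destruct (Hc (ball (f x) eps) (locally_ball _ eps)) as [d Hd].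
  exists d. intros y Hy. apply Hd. exact Hy.
Qed.

Lemma cont_line_u (f : C -> R) (z : C) : continuous f z ->
  continuous (fun t => f (t, snd z)) (fst z).
Proof.
  destruct z as [x0 y0]; simpl. intros Hc. apply cont_R_intro. intro eps. destruct (cont_C_elim f _ Hc eps) as [d Hd].
  exists d. intros y Hy. apply (Hd (y, y0)); simpl; auto.
  replace (y0 - y0) with 0 by ring. rewrite Rabs_R0. apply cond_pos.
Qed.

Lemma cont_line_v (f : C -> R) (z : C) : continuous f z ->
  continuous (fun t => f (fst z, t)) (snd z).
Proof.
  destruct z as [x0 y0]; simpl. intros Hc. apply cont_R_intro. intro eps. destruct (cont_C_elim f _ Hc eps) as [d Hd].
  exists d. intros y Hy. apply (Hd (x0, y)); simpl; auto.
  replace (x0 - x0) with 0 by ring. rewrite Rabs_R0. apply cond_pos.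
Qed.

Lemma cont_2d (f : C -> R) (x y : R) : continuous f (x, y) ->
  continuity_2d_pt (fun u v => f (u, v)) x y.
Proof.
  intros Hc eps. destruct (cont_C_elim f _ Hc eps) as [d Hd].
  exists d. intros u v Hu Hv. apply (Hd (u, v)); simpl; auto.
Qed.

Lemma open_sq (Omega : C -> Prop) z : open Omega -> Omega z ->
  exists r : posreal, forall w, sq z r w -> Omega w.
Proof.
  intros Ho Hz. destruct (Ho z Hz) as [r Hr]. exists r. intros w Hw.
  apply Hr. apply ball_sq. exact Hw.
Qed.

Lemma sq_open (c : C) r z : sq c r z -> exists e : posreal, forall w, sq z e w -> sq c r w.
Proof.
  intros [H1 H2].
  assert (He : 0 < Rmin (r - Rabs (fst z - fst c)) (r - Rabs (snd z - snd c))).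
  { apply Rmin_glb_lt; lra. }
  exists (mkposreal _ He). intros w [W1 W2]. simpl in W1, W2. split.
  - apply Rle_lt_trans with (Rabs (fst w - fst z) + Rabs (fst z - fst c)).
    + replace (fst w - fst c) with ((fst w - fst z) + (fst z - fst c)) by ring.
      apply Rabs_triang.
    + assert (Rmin (r - Rabs (fst z - fst c)) (r - Rabs (snd z - snd c)) <= r - Rabs (fst z - fst c)) by apply Rmin_l. lra.
  - apply Rle_lt_trans with (Rabs (snd w - snd z) + Rabs (snd z - snd c)).
    + replace (snd w - snd c) with ((snd w - snd z) + (snd z - snd c)) by ring.
      apply Rabs_triang.
    + assert (Rmin (r - Rabs (fst z - fst c)) (r - Rabs (snd z - snd c)) <= r - Rabs (snd z - snd c)) by apply Rmin_r. lra.
Qed.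

Lemma locally_C_sq (z : C) (P : C -> Prop) (e : posreal) : (forall w, sq z e w -> P w) -> locally z P.
Proof. intros H. exists e. intros w Hw. apply H. apply ball_sq. exact Hw. Qed.

Lemma locally_sq_C (c : C) r (z : C) : sq c r z -> locally z (sq c r).
Proof. intros H. destruct (sq_open c r z H) as [e He]. apply locally_C_sq with e. exact He. Qed.

Lemma locally_R_line_u (z : C) (P : C -> Prop) : locally z P -> locally (fst z) (fun t => P (t, snd z)).
Proof.
  intros [e He]. exists e. intros y Hy. apply He. split; [exact Hy|].
  simpl. apply ballR. replace (snd z - snd z) with 0 by ring. rewrite Rabs_R0. apply cond_pos.
Qed.

Lemma locally_R_line_v (z : C) (P : C -> Prop) : locally z P -> locally (snd z) (fun t => P (fst z, t)).
Proof.
  intros [e He]. exists e. intros y Hy. apply He. split; [|exact Hy].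
  simpl. apply ballR. replace (fst z - fst z) with 0 by ring. rewrite Rabs_R0. apply cond_pos.
Qed.

Open Scope R_scope.

Definition prim (U : C -> Prop) (a b : C -> R) (G : C -> R) : Prop :=
  forall z, U z -> is_derive (fun t => G (t, snd z)) (fst z) (a z) /\
                   is_derive (fun t => G (fst z, t)) (snd z) (b z).

Definition closed_form (U : C -> Prop) (a b : C -> R) : Prop :=
  forall z, U z -> continuous a z /\ continuous b z /\
    ex_derive (fun t => a (fst z, t)) (snd z) /\
    ex_derive (fun t => b (t, snd z)) (fst z) /\
    continuous (pv a) z /\ continuous (pu b) z /\ pv a z = pu b z.

Lemma between_abs a b s : Rmin a b <= s <= Rmax a b -> Rabs (s - a) <= Rabs (b - a).
Proof.
  intros H. unfold Rmin, Rmax in H. destruct (Rle_dec a b);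
  repeat (unfold Rabs; destruct Rcase_abs); lra.
Qed.

Lemma sq_seg_v c r x y s : sq c r (x, y) -> Rmin (snd c) y <= s <= Rmax (snd c) y -> sq c r (x, s).
Proof.
  intros [H1 H2] Hs. split; simpl in *; auto. apply between_abs in Hs. lra.
Qed.

Lemma sq_seg_u c r x s : 0 < r -> Rabs (x - fst c) < r -> Rmin (fst c) x <= s <= Rmax (fst c) x -> sq c r (s, snd c).
Proof.
  intros Hr H1 Hs. split; simpl in *; auto. apply between_abs in Hs. lra.
  replace (snd c - snd c) with 0 by ring. rewrite Rabs_R0. auto.
Qed.

Lemma deriv_RInt_R (f : R -> R) a x :
  locally x (fun x' => forall t, Rmin a x' <= t <= Rmax a x' -> continuous f t) ->
  continuous f x -> is_derive (fun t => RInt f a t) x (f x).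
Proof.
  intros Hl Hc. apply (is_derive_RInt f (fun t => RInt f a t) a x); auto.
  eapply filter_imp; [|exact Hl]. intros x' Hx'. apply (RInt_correct f).
  apply ex_RInt_continuous. exact Hx'.
Qed.

Lemma local_prim (a b : C -> R) (c : C) (r : R) :
  closed_form (sq c r) a b -> exists G, prim (sq c r) a b G.
Proof.
  intros Hcf.
  exists (fun z => RInt (fun t => a (t, snd c)) (fst c) (fst z) + RInt (fun s => b (fst z, s)) (snd c) (snd z)).
  intros [x y] Hz. simpl.
  assert (Hr : 0 < r). { destruct Hz as [H1 _]. pose proof (Rabs_pos (x - fst c)). simpl in H1. lra. }
  pose proof (locally_sq_C c r (x,y) Hz) as Hl.
  split.
  -
    assert (Ha : is_derive (fun t => RInt (fun t0 => a (t0, snd c)) (fst c) t) x (a (x, snd c))).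
    { apply (deriv_RInt_R (fun t0 => a (t0, snd c))).
      + apply locally_R_line_u in Hl. simpl in Hl.
        eapply filter_imp; [|exact Hl]. intros x' Hx' t Ht.
        assert (Hs : sq c r (t, snd c)) by (apply (sq_seg_u c r x'); auto; apply Hx').
        destruct (Hcf _ Hs) as [Hca _]. apply (cont_line_u a (t, snd c) Hca).
      + assert (Hs : sq c r (x, snd c)).
        { apply (sq_seg_u c r x); auto. apply Hz. split; [apply Rmin_r | apply Rmax_r]. }
        destruct (Hcf _ Hs) as [Hca _]. apply (cont_line_u a (x, snd c) Hca). }
    assert (Hb : is_derive (fun t => RInt (fun s => b (t, s)) (snd c) y) x
                   (RInt (fun s => Derive (fun u => b (u, s)) x) (snd c) y)).
    { apply (is_derive_RInt_param (fun u s => b (u, s))).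
      + apply locally_R_line_u in Hl. simpl in Hl.
        eapply filter_imp; [|exact Hl]. intros x' Hx' t Ht.
        assert (Hs : sq c r (x', t)) by (apply (sq_seg_v c r x' y); auto).
        destruct (Hcf _ Hs) as [_ [_ [_ [Hd _]]]]. exact Hd.
      + intros t Ht.
        assert (Hs : sq c r (x, t)) by (apply (sq_seg_v c r x y); auto).
        destruct (Hcf _ Hs) as [_ [_ [_ [_ [_ [Hd _]]]]]].
        apply cont_2d in Hd. exact Hd.
      + apply locally_R_line_u in Hl. simpl in Hl.
        eapply filter_imp; [|exact Hl]. intros x' Hx'.
        apply (@ex_RInt_continuous R_CompleteNormedModule). intros t Ht.
        assert (Hs : sq c r (x', t)) by (apply (sq_seg_v c r x' y); auto).
        destruct (Hcf _ Hs) as [_ [Hcb _]]. apply (cont_line_v b (x', t) Hcb). }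
    assert (HI : RInt (fun s => Derive (fun u => b (u, s)) x) (snd c) y = a (x, y) - a (x, snd c)).
    { rewrite <- (RInt_Derive (fun s => a (x, s))).
      - apply RInt_ext. intros t Ht.
        assert (Hs : sq c r (x, t)).
        { apply (sq_seg_v c r x y); auto. split; apply Rlt_le; apply Ht. }
        destruct (Hcf _ Hs) as [_ [_ [_ [_ [_ [_ He]]]]]]. unfold pv, pu in He. simpl in He.
        rewrite He. reflexivity.
      - intros t Ht.
        assert (Hs : sq c r (x, t)) by (apply (sq_seg_v c r x y); auto).
        destruct (Hcf _ Hs) as [_ [_ [Hd _]]]. exact Hd.
      - intros t Ht.
        assert (Hs : sq c r (x, t)) by (apply (sq_seg_v c r x y); auto).
        destruct (Hcf _ Hs) as [_ [_ [_ [_ [Hd _]]]]].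
        apply (cont_line_v _ (x, t)) in Hd. exact Hd. }
    rewrite HI in Hb.
    replace (a (x, y)) with (a (x, snd c) + (a (x, y) - a (x, snd c))) by ring.
    apply (is_derive_plus (fun t => RInt (fun t0 => a (t0, snd c)) (fst c) t)
                          (fun t => RInt (fun s => b (t, s)) (snd c) y)); assumption.
  -
    replace (b (x, y)) with (0 + b (x, y)) by ring.
    apply (is_derive_plus (fun _ => RInt (fun t0 => a (t0, snd c)) (fst c) x)
                          (fun t => RInt (fun s => b (x, s)) (snd c) t)).
    + apply (is_derive_const (K:=R_AbsRing) (V:=R_NormedModule)).
    + apply (deriv_RInt_R (fun s => b (x, s))).
      * apply locally_R_line_v in Hl. simpl in Hl.
        eapply filter_imp; [|exact Hl]. intros y' Hy' t Ht.
        assert (Hs : sq c r (x, t)) by (apply (sq_seg_v c r x y'); auto).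
        destruct (Hcf _ Hs) as [_ [Hcb _]]. apply (cont_line_v b (x, t) Hcb).
      * destruct (Hcf _ Hz) as [_ [Hcb _]]. apply (cont_line_v b (x, y) Hcb).
Qed.

Lemma between_lt x1 x2 t c r : Rmin x1 x2 <= t <= Rmax x1 x2 ->
  Rabs (x1 - c) < r -> Rabs (x2 - c) < r -> Rabs (t - c) < r.
Proof.
  intros H. unfold Rmin, Rmax in H. destruct (Rle_dec x1 x2);
  repeat (unfold Rabs; destruct Rcase_abs); lra.
Qed.

Lemma const_deriv0 (f : R -> R) x y :
  (forall t, Rmin x y <= t <= Rmax x y -> is_derive f t 0) -> f x = f y.
Proof.
  intros H. destruct (MVT_gen f x y (fun _ => 0)) as [c [_ Hc]].
  - intros t Ht. apply H. split; apply Rlt_le; apply Ht.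
  - intros t Ht. apply continuity_pt_filterlim. apply (ex_derive_continuous (K:=R_AbsRing) (V:=R_NormedModule)).
    exists 0. apply H. exact Ht.
  - lra.
Qed.

Lemma prim_diff_const a b c1 r1 c2 r2 G1 G2 z w :
  prim (sq c1 r1) a b G1 -> prim (sq c2 r2) a b G2 ->
  sq c1 r1 z -> sq c2 r2 z -> sq c1 r1 w -> sq c2 r2 w ->
  G1 z - G2 z = G1 w - G2 w.
Proof.
  intros P1 P2 [Z1 Z1'] [Z2 Z2'] [W1 W1'] [W2 W2'].
  destruct z as [x1 y1]; destruct w as [x2 y2]; simpl in *.
  transitivity (G1 (x2, y1) - G2 (x2, y1)).
  - apply (const_deriv0 (fun t => G1 (t, y1) - G2 (t, y1))).
    intros t Ht.
    assert (S1 : sq c1 r1 (t, y1)) by (split; simpl; [apply (between_lt x1 x2)|]; auto).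
    assert (S2 : sq c2 r2 (t, y1)) by (split; simpl; [apply (between_lt x1 x2)|]; auto).
    destruct (P1 _ S1) as [D1 _]. destruct (P2 _ S2) as [D2 _]. simpl in D1, D2.
    replace 0 with (a (t, y1) - a (t, y1)) by ring.
    apply (is_derive_minus (fun t => G1 (t, y1)) (fun t => G2 (t, y1))); auto.
  - apply (const_deriv0 (fun t => G1 (x2, t) - G2 (x2, t))).
    intros t Ht.
    assert (S1 : sq c1 r1 (x2, t)) by (split; simpl; [|apply (between_lt y1 y2)]; auto).
    assert (S2 : sq c2 r2 (x2, t)) by (split; simpl; [|apply (between_lt y1 y2)]; auto).
    destruct (P1 _ S1) as [_ D1]. destruct (P2 _ S2) as [_ D2]. simpl in D1, D2.
    replace 0 with (b (x2, t) - b (x2, t)) by ring.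
    apply (is_derive_minus (fun t => G1 (x2, t)) (fun t => G2 (x2, t))); auto.
Qed.

Open Scope R_scope.

Definition adm (Om : C -> Prop) (a b : C -> R) (c : C) (r : R) (G : C -> R) : Prop :=
  0 < r /\ (forall w, sq c r w -> Om w) /\ prim (sq c r) a b G.

Definition liftI (Om : C -> Prop) (a b : C -> R) (al be : R) (ga : R -> C) (phi : R -> R) : Prop :=
  forall t, al <= t <= be -> exists c r G, adm Om a b c r G /\
    exists eps : posreal, forall s, al <= s <= be -> Rabs (s - t) < eps ->
      sq c r (ga s) /\ phi s - G (ga s) = phi t - G (ga t).

Definition ccont (al be : R) (ga : R -> C) : Prop :=
  forall t, al <= t <= be -> forall e : posreal, exists d : posreal,
    forall s, al <= s <= be -> Rabs (s - t) < d -> sq (ga t) e (ga s).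

Lemma Rabs_zero_lt (e : posreal) : Rabs 0 < e.
Proof. rewrite Rabs_R0. apply cond_pos. Qed.

Lemma sq_refl c (e : posreal) : sq c e c.
Proof. split; replace (_ - _) with 0 by ring; apply Rabs_zero_lt. Qed.

Lemma posmin (a b : posreal) : 0 < Rmin a b.
Proof. apply Rmin_glb_lt; apply cond_pos. Qed.
Definition pmin (a b : posreal) : posreal := mkposreal _ (posmin a b).
Lemma pmin_l (a b : posreal) : pmin a b <= a.
Proof. apply Rmin_l. Qed.
Lemma pmin_r (a b : posreal) : pmin a b <= b.
Proof. apply Rmin_r. Qed.

Lemma lift_any Om a b al be ga phi t c r G :
  ccont al be ga -> liftI Om a b al be ga phi -> al <= t <= be ->
  adm Om a b c r G -> sq c r (ga t) ->
  exists eps : posreal, forall s, al <= s <= be -> Rabs (s - t) < eps ->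
      sq c r (ga s) /\ phi s - G (ga s) = phi t - G (ga t).
Proof.
  intros Hc Hl Ht Ha Hsq.
  destruct (Hl t Ht) as [c' [r' [G' [Ha' [e' He']]]]].
  destruct (sq_open c r _ Hsq) as [e1 He1].
  destruct (Hc t Ht e1) as [d Hd].
  exists (pmin e' d). intros s Hs Hst.
  assert (Hs1 : Rabs (s - t) < e') by (pose proof (pmin_l e' d); lra).
  assert (Hs2 : Rabs (s - t) < d) by (pose proof (pmin_r e' d); lra).
  destruct (He' s Hs Hs1) as [Sq' Eq'].
  assert (Sq : sq c r (ga s)) by (apply He1; apply Hd; auto).
  split; auto.
  destruct (He' t Ht) as [Sqt _]. { replace (t - t) with 0 by ring. apply Rabs_zero_lt. }
  destruct Ha as [_ [_ P]]. destruct Ha' as [_ [_ P']].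
  pose proof (prim_diff_const a b c r c' r' G G' (ga s) (ga t) P P' Sq Sq' Hsq Sqt).
  lra.
Qed.

Definition clamp (al be x : R) := Rmax al (Rmin be x).

Lemma clamp_in al be x : al <= be -> al <= clamp al be x <= be.
Proof. intros H. unfold clamp, Rmax, Rmin. repeat destruct Rle_dec; lra. Qed.

Lemma clamp_id al be x : al <= x <= be -> clamp al be x = x.
Proof. intros H. unfold clamp, Rmax, Rmin. repeat destruct Rle_dec; lra. Qed.

Lemma clamp_lip al be x y : al <= be -> Rabs (clamp al be x - clamp al be y) <= Rabs (x - y).
Proof. intros H. unfold clamp, Rmax, Rmin. repeat destruct Rle_dec; repeat (unfold Rabs; destruct Rcase_abs); lra. Qed.

Lemma LC_interval (f : R -> R) al be :
  al <= be ->
  (forall t, al <= t <= be -> exists eps : posreal, forall s, al <= s <= be -> Rabs (s - t) < eps -> f s = f t) ->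
  forall s, al <= s <= be -> f s = f al.
Proof.
  intros Hab H s Hs.
  set (g := fun x => f (clamp al be x)).
  assert (Hd : forall x, is_derive g x 0).
  { intros x. destruct (H (clamp al be x) (clamp_in al be x Hab)) as [eps He].
    apply (is_derive_ext_loc (fun _ => g x)).
    - exists eps. intros y Hy. change (Rabs (y - x) < eps) in Hy. unfold g. symmetry. apply He.
      + apply clamp_in; auto.
      + pose proof (clamp_lip al be y x Hab). lra.
    - apply (is_derive_const (K:=R_AbsRing) (V:=R_NormedModule)). }
  pose proof (const_deriv0 g s al (fun t _ => Hd t)) as E.
  unfold g in E. rewrite !clamp_id in E; auto. lra.
Qed.

Lemma lift_segment Om a b al be ga phi c r G u v :
  ccont al be ga -> liftI Om a b al be ga phi -> adm Om a b c r G ->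
  al <= u -> u <= v -> v <= be -> (forall s, u <= s <= v -> sq c r (ga s)) ->
  phi v - G (ga v) = phi u - G (ga u).
Proof.
  intros Hc Hl Ha H1 H2 H3 Hin.
  apply (LC_interval (fun s => phi s - G (ga s)) u v H2); [|lra].
  intros t Ht. destruct (lift_any Om a b al be ga phi t c r G Hc Hl ltac:(lra) Ha (Hin t Ht)) as [eps He].
  exists eps. intros s Hs Hst. apply He; auto. lra.
Qed.

Lemma lift_unique Om a b al be ga phi1 phi2 :
  al <= be -> ccont al be ga -> liftI Om a b al be ga phi1 -> liftI Om a b al be ga phi2 ->
  forall s, al <= s <= be -> phi1 s - phi2 s = phi1 al - phi2 al.
Proof.
  intros Hab Hc H1 H2.
  apply (LC_interval (fun s => phi1 s - phi2 s) al be Hab).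
  intros t Ht. destruct (H1 t Ht) as [c [r [G [Ha [e1 He1]]]]].
  destruct (He1 t Ht) as [Sqt _]. { replace (t - t) with 0 by ring. apply Rabs_zero_lt. }
  destruct (lift_any Om a b al be ga phi2 t c r G Hc H2 Ht Ha Sqt) as [e2 He2].
  exists (pmin e1 e2). intros s Hs Hst.
  assert (Hs1 : Rabs (s - t) < e1) by (pose proof (pmin_l e1 e2); lra).
  assert (Hs2 : Rabs (s - t) < e2) by (pose proof (pmin_r e1 e2); lra).
  destruct (He1 s Hs Hs1) as [_ E1]. destruct (He2 s Hs Hs2) as [_ E2]. lra.
Qed.

Lemma ccont_sub al be al' be' ga : al <= al' -> be' <= be -> ccont al be ga -> ccont al' be' ga.
Proof.
  intros H1 H2 Hc t Ht e. destruct (Hc t ltac:(lra) e) as [d Hd]. exists d.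
  intros s Hs Hst. apply Hd; auto. lra.
Qed.

Lemma lift_glue Om a b al m be ga phi1 phi2 :
  al <= m <= be -> ccont al be ga ->
  liftI Om a b al m ga phi1 -> liftI Om a b m be ga phi2 -> phi1 m = phi2 m ->
  liftI Om a b al be ga (fun s => if Rle_dec s m then phi1 s else phi2 s).
Proof.
  intros Hm Hc H1 H2 E t Ht.
  destruct (Rtotal_order t m) as [Hlt | [Heq | Hgt]].
  - destruct (H1 t ltac:(lra)) as [c [r [G [Ha [e He]]]]].
    assert (Hp : 0 < m - t) by lra.
    exists c, r, G. split; auto. exists (pmin e (mkposreal _ Hp)). intros s Hs Hst.
    assert (Hs1 : Rabs (s - t) < e) by (pose proof (pmin_l e (mkposreal _ Hp)); lra).
    assert (Hs2 : Rabs (s - t) < m - t) by (pose proof (pmin_r e (mkposreal _ Hp)); simpl in *; lra).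
    assert (s < m) by (unfold Rabs in Hs2; destruct Rcase_abs in Hs2; lra).
    destruct (Rle_dec s m); [|lra]. destruct (Rle_dec t m); [|lra].
    apply He; auto. lra.
  - subst t.
    destruct (H2 m ltac:(lra)) as [c [r [G [Ha [e2 He2]]]]].
    destruct (He2 m ltac:(lra)) as [Sqm _]. { replace (m - m) with 0 by ring. apply Rabs_zero_lt. }
    destruct (lift_any Om a b al m ga phi1 m c r G (ccont_sub al be al m ga ltac:(lra) ltac:(lra) Hc) H1 ltac:(lra) Ha Sqm) as [e1 He1].
    exists c, r, G. split; auto. exists (pmin e1 e2). intros s Hs Hst.
    assert (Hs1 : Rabs (s - m) < e1) by (pose proof (pmin_l e1 e2); lra).
    assert (Hs2 : Rabs (s - m) < e2) by (pose proof (pmin_r e1 e2); lra).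
    destruct (Rle_dec m m); [|lra].
    destruct (Rle_dec s m).
    + apply He1; auto. lra.
    + rewrite E. apply He2; auto. lra.
  - destruct (H2 t ltac:(lra)) as [c [r [G [Ha [e He]]]]].
    assert (Hp : 0 < t - m) by lra.
    exists c, r, G. split; auto. exists (pmin e (mkposreal _ Hp)). intros s Hs Hst.
    assert (Hs1 : Rabs (s - t) < e) by (pose proof (pmin_l e (mkposreal _ Hp)); lra).
    assert (Hs2 : Rabs (s - t) < t - m) by (pose proof (pmin_r e (mkposreal _ Hp)); simpl in *; lra).
    assert (s > m) by (unfold Rabs in Hs2; destruct Rcase_abs in Hs2; lra).
    destruct (Rle_dec s m); [lra|]. destruct (Rle_dec t m); [lra|].
    apply He; auto. lra.
Qed.

Lemma lift_single Om a b u v ga c r G k :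
  adm Om a b c r G -> (forall s, u <= s <= v -> sq c r (ga s)) ->
  liftI Om a b u v ga (fun s => G (ga s) + k).
Proof.
  intros Ha Hin t Ht. exists c, r, G. split; auto. exists (mkposreal 1 Rlt_0_1).
  intros s Hs _. split; auto. ring.
Qed.

Lemma lift_ext Om a b al be ga ga' phi phi' :
  (forall s, al <= s <= be -> ga s = ga' s) -> (forall s, al <= s <= be -> phi s = phi' s) ->
  liftI Om a b al be ga phi -> liftI Om a b al be ga' phi'.
Proof.
  intros E1 E2 H t Ht. destruct (H t Ht) as [c [r [G [Ha [e He]]]]].
  exists c, r, G. split; auto. exists e. intros s Hs Hst.
  rewrite <- !E1, <- !E2; auto.
Qed.

Lemma ccont_ext al be ga ga' :
  (forall s, al <= s <= be -> ga s = ga' s) -> ccont al be ga -> ccont al be ga'.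
Proof.
  intros E H t Ht e. destruct (H t Ht e) as [d Hd]. exists d. intros s Hs Hst.
  rewrite <- !E; auto.
Qed.

Definition rcont (al be al' be' : R) (sig : R -> R) : Prop :=
  (forall t, al' <= t <= be' -> al <= sig t <= be) /\
  forall t, al' <= t <= be' -> forall e : posreal, exists d : posreal,
    forall s, al' <= s <= be' -> Rabs (s - t) < d -> Rabs (sig s - sig t) < e.

Lemma lift_pull Om a b al be al' be' ga phi sig :
  rcont al be al' be' sig -> liftI Om a b al be ga phi ->
  liftI Om a b al' be' (fun t => ga (sig t)) (fun t => phi (sig t)).
Proof.
  intros [Hin Hc] H t Ht. destruct (H (sig t) (Hin t Ht)) as [c [r [G [Ha [e He]]]]].
  exists c, r, G. split; auto. destruct (Hc t Ht e) as [d Hd]. exists d.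
  intros s Hs Hst. apply He; auto.
Qed.

Lemma ccont_pull al be al' be' ga sig :
  rcont al be al' be' sig -> ccont al be ga -> ccont al' be' (fun t => ga (sig t)).
Proof.
  intros [Hin Hc] H t Ht e. destruct (H (sig t) (Hin t Ht) e) as [d1 Hd1].
  destruct (Hc t Ht d1) as [d Hd]. exists d. intros s Hs Hst. apply Hd1; auto.
Qed.

Lemma rcont_affine al be al' be' p q :
  (forall t, al' <= t <= be' -> al <= p * t + q <= be) ->
  rcont al be al' be' (fun t => p * t + q).
Proof.
  intros Hin. split; auto. intros t Ht e.
  assert (Hp : 0 < e / (Rabs p + 1)).
  { apply Rdiv_lt_0_compat. apply cond_pos. pose proof (Rabs_pos p). lra. }
  exists (mkposreal _ Hp). intros s Hs Hst. simpl in Hst.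
  replace (p * s + q - (p * t + q)) with (p * (s - t)) by ring.
  rewrite Rabs_mult. pose proof (Rabs_pos p). pose proof (Rabs_pos (s - t)).
  apply Rle_lt_trans with ((Rabs p + 1) * Rabs (s - t)). nra.
  apply Rmult_lt_reg_l with (/ (Rabs p + 1)). apply Rinv_0_lt_compat. lra.
  rewrite <- Rmult_assoc, Rinv_l by lra. rewrite Rmult_1_l.
  unfold Rdiv in Hst. lra.
Qed.

Open Scope R_scope.

Lemma choose_pos (P : R -> posreal -> Prop) :
  (forall t, exists d : posreal, P t d) -> exists f : R -> posreal, forall t, P t (f t).
Proof.
  intros H. exists (fun t => proj1_sig (constructive_indefinite_description _ (H t))).
  intros t. exact (proj2_sig (constructive_indefinite_description _ (H t))).
Qed.

Lemma half_pos (d : posreal) : 0 < d / 2.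
Proof. pose proof (cond_pos d). lra. Qed.
Definition phalf (d : posreal) : posreal := mkposreal _ (half_pos d).

Lemma sq_pos c r z : sq c r z -> 0 < r.
Proof. intros [H _]. pose proof (Rabs_pos (fst z - fst c)). lra. Qed.

Lemma sq_refl' c r : 0 < r -> sq c r c.
Proof. intros H. split; replace (_ - _) with 0 by ring; rewrite Rabs_R0; auto. Qed.

Lemma sq_tri c x y e1 e2 : sq c e1 x -> sq x e2 y -> sq c (e1 + e2) y.
Proof.
  intros [H1 H2] [H3 H4]. split.
  - replace (fst y - fst c) with ((fst y - fst x) + (fst x - fst c)) by ring.
    eapply Rle_lt_trans; [apply Rabs_triang|]. lra.
  - replace (snd y - snd c) with ((snd y - snd x) + (snd x - snd c)) by ring.
    eapply Rle_lt_trans; [apply Rabs_triang|]. lra.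
Qed.

Lemma sq_sym c r z : sq c r z -> sq z r c.
Proof. intros [H1 H2]. split; rewrite Rabs_minus_sym; auto. Qed.

Lemma sq_mono c r r' z : r <= r' -> sq c r z -> sq c r' z.
Proof. intros H [H1 H2]. split; lra. Qed.

Lemma closed_form_sub (U V : C -> Prop) a b : (forall z, U z -> V z) -> closed_form V a b -> closed_form U a b.
Proof. intros H Hc z Hz. apply Hc. auto. Qed.

Lemma adm_exists Om a b c r : open Om -> closed_form Om a b -> 0 < r -> (forall w, sq c r w -> Om w) ->
  exists G, adm Om a b c r G.
Proof.
  intros Ho Hcf Hr Hin. destruct (local_prim a b c r (closed_form_sub _ _ a b Hin Hcf)) as [G HG].
  exists G. split; auto.
Qed.

Lemma NNPP' (P : Prop) : ~ ~ P -> P.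
Proof. apply NNPP. Qed.

Lemma lift_exists Om a b al be ga :
  open Om -> closed_form Om a b -> al <= be -> ccont al be ga ->
  (forall s, al <= s <= be -> Om (ga s)) ->
  exists phi, liftI Om a b al be ga phi /\ phi al = 0.
Proof.
  intros Ho Hcf Hab Hc Hin.
  set (P := fun t (d : posreal) => al <= t <= be -> exists r G, adm Om a b (ga t) r G /\
             forall s, al <= s <= be -> Rabs (s - t) < d -> sq (ga t) r (ga s)).
  assert (HP : forall t, exists d, P t d).
  { intros t. destruct (Rle_dec al t) as [H1|H1]; [destruct (Rle_dec t be) as [H2|H2]|].
    - destruct (open_sq Om (ga t) Ho (Hin t (conj H1 H2))) as [r Hr].
      destruct (adm_exists Om a b (ga t) r Ho Hcf (cond_pos r) Hr) as [G HG].
      destruct (Hc t (conj H1 H2) r) as [d Hd]. exists d. intros _. exists r, G. split; auto.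
    - exists (mkposreal 1 Rlt_0_1). intros H. lra.
    - exists (mkposreal 1 Rlt_0_1). intros H. lra. }
  destruct (choose_pos P HP) as [del Hdel].
  destruct (compactness_value_1d al be (fun t => phalf (del t))) as [d Hd].
  assert (Claim : forall n : nat, forall T, al <= T <= be -> T <= al + INR n * d ->
            exists phi, liftI Om a b al T ga phi /\ phi al = 0).
  { induction n as [|n IH]; intros T HT HTn.
    - simpl in HTn. assert (T = al) by lra. subst T.
      destruct (Hdel al ltac:(lra)) as [r [G [Ha Hs]]].
      exists (fun _ => 0). split; auto. intros t Ht. assert (t = al) by lra. subst t.
      exists (ga al), r, G. split; auto. exists (mkposreal 1 Rlt_0_1). intros s Hs' _.
      assert (s = al) by lra. subst s. split; [apply sq_refl'; apply Ha | ring].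
    - destruct (Rle_dec T (al + INR n * d)) as [Hle|Hgt].
      + apply IH; auto.
      + set (T' := al + INR n * d).
        assert (HT' : al <= T' < T).
        { unfold T'. pose proof (pos_INR n). pose proof (cond_pos d). split; [nra|lra]. }
        rewrite S_INR in HTn.
        destruct (IH T' ltac:(lra) ltac:(unfold T'; lra)) as [phi [Hphi Hphi0]].
        apply NNPP'. intro Hneg.
        apply (Hd T' ltac:(lra)). intros [ts [Hts [Hts1 Hts2]]]. apply Hneg. simpl in Hts1, Hts2.
        destruct (Hdel ts Hts) as [r [G [Ha Hsq]]].
        assert (Hin' : forall s, T' <= s <= T -> sq (ga ts) r (ga s)).
        { intros s Hs. apply Hsq; [lra|].
          replace (s - ts) with ((s - T') + (T' - ts)) by ring.
          eapply Rle_lt_trans; [apply Rabs_triang|].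
          assert (T - T' <= d) by (unfold T'; lra). rewrite (Rabs_pos_eq (s - T')) by lra. lra. }
        pose proof (lift_single Om a b T' T ga (ga ts) r G (phi T' - G (ga T')) Ha Hin') as Hl2.
        exists (fun s => if Rle_dec s T' then phi s else G (ga s) + (phi T' - G (ga T'))).
        split.
        * apply lift_glue; auto. lra. apply (ccont_sub al be); auto; lra.
          destruct (Rle_dec T' T'); lra.
        * destruct (Rle_dec al T'); auto. lra. }
  destruct (INR_unbounded ((be - al) / d)) as [n Hn].
  apply (Claim n be); [lra|].
  assert (INR n * d > be - al).
  { apply Rmult_lt_reg_r with (/ d). apply Rinv_0_lt_compat, cond_pos.
    rewrite Rmult_assoc, Rinv_r by (apply Rgt_not_eq, cond_pos). unfold Rdiv in Hn. lra. }
  lra.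
Qed.

Lemma uniform_radius Om al be ga :
  open Om -> al <= be -> ccont al be ga -> (forall s, al <= s <= be -> Om (ga s)) ->
  exists rho : posreal, forall t, al <= t <= be -> forall w, sq (ga t) rho w -> Om w.
Proof.
  intros Ho Hab Hc Hin.
  set (P := fun t (d : posreal) => al <= t <= be -> exists r : posreal, d <= r / 2 /\
             (forall w, sq (ga t) r w -> Om w) /\
             forall s, al <= s <= be -> Rabs (s - t) < d -> sq (ga t) (r / 2) (ga s)).
  assert (HP : forall t, exists d, P t d).
  { intros t. destruct (Rle_dec al t) as [H1|H1]; [destruct (Rle_dec t be) as [H2|H2]|].
    - destruct (open_sq Om (ga t) Ho (Hin t (conj H1 H2))) as [r Hr].
      destruct (Hc t (conj H1 H2) (phalf r)) as [d Hd].
      exists (pmin d (phalf r)). intros _. exists r. split; [apply pmin_r|]. split; auto.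
      intros s Hs Hst. apply Hd; auto. pose proof (pmin_l d (phalf r)). lra.
    - exists (mkposreal 1 Rlt_0_1). intros H. lra.
    - exists (mkposreal 1 Rlt_0_1). intros H. lra. }
  destruct (choose_pos P HP) as [del Hdel].
  destruct (compactness_value_1d al be del) as [d Hd].
  exists d. intros t Ht w Hw. apply NNPP'. intro Hneg.
  apply (Hd t Ht). intros [ts [Hts [Hts1 Hts2]]]. apply Hneg.
  destruct (Hdel ts Hts) as [r [Hr1 [Hr2 Hr3]]].
  apply Hr2. replace (pos r) with (r / 2 + r / 2) by field.
  apply sq_tri with (ga t). apply Hr3; auto. apply (sq_mono _ d); auto. lra.
Qed.

Definition hcont (H : R * R -> C) : Prop :=
  forall p, unit_square p -> forall e : posreal, exists d : posreal,
    forall q, unit_square q -> Rabs (fst q - fst p) < d -> Rabs (snd q - snd p) < d ->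
      sq (H p) e (H q).

Lemma unif_in_t H s0 :
  hcont H -> 0 <= s0 <= 1 -> forall e : posreal, exists eta : posreal,
    forall s, 0 <= s <= 1 -> Rabs (s - s0) < eta -> forall t, 0 <= t <= 1 ->
      sq (H (s0, t)) e (H (s, t)).
Proof.
  intros Hc Hs0 e.
  set (P := fun t (d : posreal) => 0 <= t <= 1 ->
             forall q, unit_square q -> Rabs (fst q - s0) < d -> Rabs (snd q - t) < d ->
               sq (H (s0, t)) (e / 2) (H q)).
  assert (HP : forall t, exists d, P t d).
  { intros t. destruct (Rle_dec 0 t) as [H1|H1]; [destruct (Rle_dec t 1) as [H2|H2]|].
    - destruct (Hc (s0, t) (conj Hs0 (conj H1 H2)) (phalf e)) as [d Hd].
      exists d. intros _ q Hq. apply Hd; auto.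
    - exists (mkposreal 1 Rlt_0_1). intros H'. lra.
    - exists (mkposreal 1 Rlt_0_1). intros H'. lra. }
  destruct (choose_pos P HP) as [del Hdel].
  destruct (compactness_value_1d 0 1 (fun t => phalf (del t))) as [d Hd].
  exists d. intros s Hs Hss0 t Ht. apply NNPP'. intro Hneg.
  apply (Hd t Ht). intros [ts [Hts [Hts1 Hts2]]]. apply Hneg. simpl in Hts1, Hts2.
  pose proof (cond_pos (del ts)).
  assert (A1 : sq (H (s0, ts)) (e / 2) (H (s, t))).
  { apply Hdel; auto. split; simpl; auto. simpl. lra. simpl. lra. }
  assert (A2 : sq (H (s0, ts)) (e / 2) (H (s0, t))).
  { apply Hdel; auto. split; simpl; auto. simpl. replace (s0 - s0) with 0 by ring. rewrite Rabs_R0. auto. simpl. lra. }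
  replace (pos e) with (e / 2 + e / 2) by field.
  apply sq_tri with (H (s0, ts)). apply sq_sym. auto. auto.
Qed.

Open Scope R_scope.

Lemma cont_on_hcont (H : R * R -> C) : continuous_on unit_square H -> hcont H.
Proof.
  intros Hc p Hp e. destruct (Hc p Hp (ball (H p) e) (locally_ball _ e)) as [d Hd].
  exists d. intros q Hq H1 H2. apply ball_sq. apply Hd; auto. split; auto.
Qed.

Lemma cont_on_ccont (ga : R -> C) : continuous_on unit_interval ga -> ccont 0 1 ga.
Proof.
  intros Hc t Ht e. destruct (Hc t Ht (ball (ga t) e) (locally_ball _ e)) as [d Hd].
  exists d. intros s Hs Hst. apply ball_sq. apply Hd; auto.
Qed.

Lemma ccont_cont_on (ga : R -> C) : ccont 0 1 ga -> continuous_on unit_interval ga.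
Proof.
  intros Hc t Ht P [e HP]. destruct (Hc t Ht e) as [d Hd]. exists d.
  intros s Hs HsD. apply HP. apply ball_sq. apply Hd; auto.
Qed.

Lemma hcont_row H s : hcont H -> 0 <= s <= 1 -> ccont 0 1 (fun t => H (s, t)).
Proof.
  intros Hc Hs t Ht e. destruct (Hc (s, t) (conj Hs Ht) e) as [d Hd]. exists d.
  intros t' Ht' Htt. apply Hd; simpl; auto. split; auto.
  replace (s - s) with 0 by ring. rewrite Rabs_R0. apply cond_pos.
Qed.

Lemma between_close u t t' : Rmin t t' <= u <= Rmax t t' -> Rabs (u - t) <= Rabs (t' - t).
Proof. intros H. unfold Rmin, Rmax in H. destruct (Rle_dec t t');
  repeat (unfold Rabs; destruct Rcase_abs); lra. Qed.

Lemma lift_segment2 Om a b al be ga phi c r G u v :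
  ccont al be ga -> liftI Om a b al be ga phi -> adm Om a b c r G ->
  al <= u <= be -> al <= v <= be -> (forall s, Rmin u v <= s <= Rmax u v -> sq c r (ga s)) ->
  phi v - G (ga v) = phi u - G (ga u).
Proof.
  intros Hc Hl Ha Hu Hv Hin. destruct (Rle_dec u v).
  - apply (lift_segment Om a b al be ga phi c r G u v); try lra; auto.
    intros s Hs. apply Hin. rewrite Rmin_left, Rmax_right by lra. auto.
  - symmetry. apply (lift_segment Om a b al be ga phi c r G v u); try lra; auto.
    intros s Hs. apply Hin. rewrite Rmin_right, Rmax_left by lra. auto.
Qed.

Lemma choose_fun {A B : Type} (P : A -> B -> Prop) : inhabited B ->
  (forall x, exists y, P x y) -> exists f : A -> B, forall x, P x (f x).
Proof.
  intros _ H. exists (fun x => proj1_sig (constructive_indefinite_description _ (H x))).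
  intros x. exact (proj2_sig (constructive_indefinite_description _ (H x))).
Qed.

Lemma loop_zero Om a b ga phi H :
  open Om -> closed_form Om a b -> ccont 0 1 ga ->
  hcont H -> (forall p, unit_square p -> Om (H p)) ->
  (forall t, 0 <= t <= 1 -> H (0, t) = ga t) ->
  (forall t, 0 <= t <= 1 -> H (1, t) = H (1, 0)) ->
  (forall s, 0 <= s <= 1 -> H (s, 0) = H (s, 1)) ->
  liftI Om a b 0 1 ga phi -> phi 1 = phi 0.
Proof.
  intros Ho Hcf Hga Hc HOm H0 H1 Hper Hphi.
  assert (Hrow : forall s, 0 <= s <= 1 -> ccont 0 1 (fun t => H (s, t))).
  { intros s Hs. apply hcont_row; auto. }
  assert (HrowOm : forall s, 0 <= s <= 1 -> forall t, 0 <= t <= 1 -> Om (H (s, t))).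
  { intros s Hs t Ht. apply HOm. split; auto. }
  assert (HPhi : exists Phi : R -> R -> R, forall s, 0 <= s <= 1 ->
            liftI Om a b 0 1 (fun t => H (s, t)) (Phi s)).
  { apply (choose_fun (fun s (f : R -> R) => 0 <= s <= 1 -> liftI Om a b 0 1 (fun t => H (s, t)) f)).
    { constructor. exact (fun _ => 0). }
    intros s. destruct (Rle_dec 0 s) as [A1|A1]; [destruct (Rle_dec s 1) as [A2|A2]|].
    - destruct (lift_exists Om a b 0 1 (fun t => H (s, t)) Ho Hcf ltac:(lra) (Hrow s (conj A1 A2))
                 (HrowOm s (conj A1 A2))) as [f [Hf _]].
      exists f. auto.
    - exists (fun _ => 0). intros; lra.
    - exists (fun _ => 0). intros; lra. }
  destruct HPhi as [Phi HPhi].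
  set (m := fun s => Phi s 1 - Phi s 0).
  assert (Hm : forall s, 0 <= s <= 1 -> m s = m 0).
  { apply LC_interval; [lra|]. intros s0 Hs0.
    set (g0 := fun t => H (s0, t)).
    destruct (uniform_radius Om 0 1 g0 Ho ltac:(lra) (Hrow s0 Hs0) (HrowOm s0 Hs0)) as [rho Hrho].
    destruct (choose_fun (fun c (G : C -> R) => (forall w, sq c rho w -> Om w) -> adm Om a b c rho G))
      as [Gc HGc].
    { constructor. exact (fun _ => 0). }
    { intros c. destruct (classic (forall w, sq c rho w -> Om w)) as [Hi|Hi].
      - destruct (adm_exists Om a b c rho Ho Hcf (cond_pos rho) Hi) as [G HG]. exists G. auto.
      - exists (fun _ => 0). intros Hi'. contradiction. }
    assert (Hadm : forall t, 0 <= t <= 1 -> adm Om a b (g0 t) rho (Gc (g0 t))).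
    { intros t Ht. apply HGc. apply Hrho. auto. }
    destruct (unif_in_t H s0 Hc Hs0 (phalf rho)) as [eta Heta].
    exists eta. intros s Hs Hss0.
    set (gs := fun t => H (s, t)).
    set (psi := fun t => (Phi s t - Phi s 0) - (Phi s0 t - Phi s0 0)
                        - (Gc (g0 t) (gs t) - Gc (g0 t) (g0 t))).
    assert (Hpsi : forall t, 0 <= t <= 1 -> psi t = psi 0).
    { apply LC_interval; [lra|]. intros t Ht.
      destruct (Hrow s0 Hs0 t Ht (phalf rho)) as [eps Heps].
      exists eps. intros t' Ht' Htt.
      set (c := g0 t). set (G := Gc c).
      assert (Hb : forall u, Rmin t t' <= u <= Rmax t t' -> sq c rho (gs u) /\ sq c rho (g0 u)).
      { intros u Hu. pose proof (between_close u t t' Hu) as Hut.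
        assert (Hu01 : 0 <= u <= 1).
        { unfold Rmin, Rmax in Hu. destruct (Rle_dec t t'); lra. }
        assert (S1 : sq c (rho / 2) (g0 u)) by (apply Heps; auto; lra).
        assert (S2 : sq (g0 u) (rho / 2) (gs u)) by (apply (Heta s Hs Hss0 u Hu01)).
        replace (pos rho) with (rho / 2 + rho / 2) by field.
        split. apply sq_tri with (g0 u); auto.
        apply (sq_mono _ (rho / 2)). pose proof (cond_pos rho). lra. auto. }
      assert (Hadmc : adm Om a b c rho G) by (apply Hadm; auto).
      assert (E1 : Phi s t' - G (gs t') = Phi s t - G (gs t)).
      { apply (lift_segment2 Om a b 0 1 gs (Phi s) c rho G t t' (Hrow s Hs) (HPhi s Hs) Hadmc Ht Ht').
        intros u Hu. apply Hb; auto. }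
      assert (E2 : Phi s0 t' - G (g0 t') = Phi s0 t - G (g0 t)).
      { apply (lift_segment2 Om a b 0 1 g0 (Phi s0) c rho G t t' (Hrow s0 Hs0) (HPhi s0 Hs0) Hadmc Ht Ht').
        intros u Hu. apply Hb; auto. }
      assert (Ht'b : Rmin t t' <= t' <= Rmax t t') by (split; [apply Rmin_r|apply Rmax_r]).
      assert (Htb : Rmin t t' <= t <= Rmax t t') by (split; [apply Rmin_l|apply Rmax_l]).
      destruct (Hb t' Ht'b) as [B1 B2].
      assert (Hadm' : adm Om a b (g0 t') rho (Gc (g0 t'))) by (apply Hadm; auto).
      assert (B3 : sq (g0 t') rho (gs t')).
      { apply (sq_mono _ (rho / 2)). pose proof (cond_pos rho). lra. apply (Heta s Hs Hss0 t' Ht'). }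
      assert (B4 : sq (g0 t') rho (g0 t')) by (apply sq_refl'; apply cond_pos).
      destruct Hadmc as [_ [_ Pc]]. destruct Hadm' as [_ [_ Pc']].
      pose proof (prim_diff_const a b c rho (g0 t') rho G (Gc (g0 t')) (gs t') (g0 t') Pc Pc' B1 B3 B2 B4) as E3.
      destruct (Hb t Htb) as [B5 B6].
      assert (E4 : G (g0 t) = Gc (g0 t) (g0 t)) by reflexivity.
      unfold psi. unfold G, c in *. lra. }
    pose proof (Hpsi 1 ltac:(lra)) as E. unfold psi in E.
    unfold gs, g0 in E. rewrite <- !(Hper s), <- !(Hper s0) in E by lra.
    unfold m. lra. }
  assert (Hm1 : m 1 = 0).
  { destruct (HPhi 1 ltac:(lra) 0 ltac:(lra)) as [c [r [G [Ha [e He]]]]].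
    destruct (He 0 ltac:(lra)) as [Sq0 _]. { replace (0 - 0) with 0 by ring. apply Rabs_zero_lt. }
    pose proof (lift_segment Om a b 0 1 (fun t => H (1, t)) (Phi 1) c r G 0 1 (Hrow 1 ltac:(lra))
      (HPhi 1 ltac:(lra)) Ha ltac:(lra) ltac:(lra) ltac:(lra)) as E.
    assert (Hcst : forall s, 0 <= s <= 1 -> sq c r (H (1, s))).
    { intros s Hs. rewrite H1 by auto. auto. }
    specialize (E Hcst). simpl in E. rewrite (H1 1) in E by lra. unfold m. lra. }
  assert (Hm0 : m 0 = phi 1 - phi 0).
  { assert (L : liftI Om a b 0 1 (fun t => H (0, t)) phi).
    { apply (lift_ext Om a b 0 1 ga _ phi phi); auto. intros s Hs. symmetry. auto. }
    pose proof (lift_unique Om a b 0 1 (fun t => H (0, t)) (Phi 0) phi ltac:(lra) (Hrow 0 ltac:(lra))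
                  (HPhi 0 ltac:(lra)) L 1 ltac:(lra)).
    unfold m. lra. }
  pose proof (Hm 1 ltac:(lra)). lra.
Qed.

Open Scope R_scope.

Lemma lift_add_const Om a b al be ga phi k :
  liftI Om a b al be ga phi -> liftI Om a b al be ga (fun s => phi s + k).
Proof.
  intros H t Ht. destruct (H t Ht) as [c [r [G [Ha [e He]]]]].
  exists c, r, G. split; auto. exists e. intros s Hs Hst.
  destruct (He s Hs Hst) as [S E]. split; auto. lra.
Qed.

Lemma ccont_glue al m be ga :
  al <= m <= be -> ccont al m ga -> ccont m be ga -> ccont al be ga.
Proof.
  intros Hm H1 H2 t Ht e.
  destruct (Rtotal_order t m) as [Hlt | [Heq | Hgt]].
  - destruct (H1 t ltac:(lra) e) as [d Hd]. assert (Hp : 0 < m - t) by lra.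
    exists (pmin d (mkposreal _ Hp)). intros s Hs Hst.
    pose proof (pmin_l d (mkposreal _ Hp)). pose proof (pmin_r d (mkposreal _ Hp)). simpl in *.
    assert (s < m) by (unfold Rabs in Hst; destruct Rcase_abs in Hst; lra).
    apply Hd; lra.
  - subst t. destruct (H1 m ltac:(lra) e) as [d1 Hd1]. destruct (H2 m ltac:(lra) e) as [d2 Hd2].
    exists (pmin d1 d2). intros s Hs Hst.
    pose proof (pmin_l d1 d2). pose proof (pmin_r d1 d2).
    destruct (Rle_dec s m). apply Hd1; lra. apply Hd2; lra.
  - destruct (H2 t ltac:(lra) e) as [d Hd]. assert (Hp : 0 < t - m) by lra.
    exists (pmin d (mkposreal _ Hp)). intros s Hs Hst.
    pose proof (pmin_l d (mkposreal _ Hp)). pose proof (pmin_r d (mkposreal _ Hp)). simpl in *.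
    assert (s > m) by (unfold Rabs in Hst; destruct Rcase_abs in Hst; lra).
    apply Hd; lra.
Qed.

Definition is_path (Om : C -> Prop) (ga : R -> C) : Prop :=
  ccont 0 1 ga /\ forall s, 0 <= s <= 1 -> Om (ga s).

Definition concat (g1 g2 : R -> C) : R -> C :=
  fun t => if Rle_dec t (1/2) then g1 (2 * t) else g2 (2 * t - 1).

Lemma concat_path Om g1 g2 : is_path Om g1 -> is_path Om g2 -> g1 1 = g2 0 -> is_path Om (concat g1 g2).
Proof.
  intros [C1 O1] [C2 O2] E. split.
  - apply (ccont_glue 0 (1/2) 1); [lra| |].
    + apply (ccont_ext 0 (1/2) (fun t => g1 (2 * t + 0))).
      { intros s Hs. unfold concat. destruct (Rle_dec s (1/2)); [|lra]. f_equal; try ring. }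
      apply (ccont_pull 0 1); auto. apply rcont_affine. intros; lra.
    + apply (ccont_ext (1/2) 1 (fun t => g2 (2 * t + -1))).
      { intros s Hs. unfold concat. destruct (Rle_dec s (1/2)).
        - assert (s = 1/2) by lra. subst s. replace (2 * (1/2) + -1) with 0 by field.
          replace (2 * (1/2)) with 1 by field. auto.
        - f_equal; try ring. }
      apply (ccont_pull 0 1); auto. apply rcont_affine. intros; lra.
  - intros s Hs. unfold concat. destruct (Rle_dec s (1/2)); [apply O1|apply O2]; lra.
Qed.

Lemma concat_lift Om a b g1 g2 p1 p2 :
  is_path Om g1 -> is_path Om g2 -> g1 1 = g2 0 ->
  liftI Om a b 0 1 g1 p1 -> liftI Om a b 0 1 g2 p2 ->
  liftI Om a b 0 1 (concat g1 g2)
    (fun t => if Rle_dec t (1/2) then p1 (2 * t) else p2 (2 * t - 1) + (p1 1 - p2 0)).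
Proof.
  intros P1 P2 E L1 L2.
  pose proof (concat_path Om g1 g2 P1 P2 E) as [Cc _].
  apply (lift_glue Om a b 0 (1/2) 1 (concat g1 g2) (fun t => p1 (2 * t)) (fun t => p2 (2 * t - 1) + (p1 1 - p2 0))).
  - lra.
  - exact Cc.
  - apply (lift_ext Om a b 0 (1/2) (fun t => g1 (2 * t + 0)) _ (fun t => p1 (2 * t + 0))).
    + intros s Hs. unfold concat. destruct (Rle_dec s (1/2)); [|lra]. f_equal; try ring.
    + intros s Hs. f_equal; try ring.
    + apply (lift_pull Om a b 0 1); auto. apply rcont_affine. intros; lra.
  - apply lift_add_const.
    apply (lift_ext Om a b (1/2) 1 (fun t => g2 (2 * t + -1)) _ (fun t => p2 (2 * t + -1))).
    + intros s Hs. unfold concat. destruct (Rle_dec s (1/2)).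
      * assert (s = 1/2) by lra. subst s. replace (2 * (1/2) + -1) with 0 by field.
        replace (2 * (1/2)) with 1 by field. auto.
      * f_equal; try ring.
    + intros s Hs. f_equal; try ring.
    + apply (lift_pull Om a b 0 1); auto. apply rcont_affine. intros; lra.
  - cbv beta. replace (2 * (1/2)) with 1 by field. replace (1 - 1) with 0 by ring. ring.
Qed.

Definition rev (g : R -> C) : R -> C := fun t => g (1 - t).

Lemma rev_path Om g : is_path Om g -> is_path Om (rev g).
Proof.
  intros [Cg Og]. split.
  - apply (ccont_ext 0 1 (fun t => g (-1 * t + 1))).
    { intros s Hs. unfold rev. f_equal; try ring. }
    apply (ccont_pull 0 1); auto. apply rcont_affine. intros; lra.
  - intros s Hs. unfold rev. apply Og. lra.
Qed.

Lemma rev_lift Om a b g p : liftI Om a b 0 1 g p -> liftI Om a b 0 1 (rev g) (fun t => p (1 - t)).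
Proof.
  intros L. apply (lift_ext Om a b 0 1 (fun t => g (-1 * t + 1)) _ (fun t => p (-1 * t + 1))).
  - intros s Hs. unfold rev. f_equal; try ring.
  - intros s Hs. f_equal; try ring.
  - apply (lift_pull Om a b 0 1); auto. apply rcont_affine. intros; lra.
Qed.

Lemma path_wd Om a b z0 z g1 g2 p1 p2 :
  simply_connected_domain Om -> closed_form Om a b ->
  is_path Om g1 -> is_path Om g2 -> g1 0 = z0 -> g2 0 = z0 -> g1 1 = z -> g2 1 = z ->
  liftI Om a b 0 1 g1 p1 -> liftI Om a b 0 1 g2 p2 -> p1 0 = 0 -> p2 0 = 0 -> p1 1 = p2 1.
Proof.
  intros [[_ [Ho _]] Hsc] Hcf P1 P2 E1 E2 F1 F2 L1 L2 Z1 Z2.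
  pose proof (rev_path Om g2 P2) as P2'.
  assert (E : g1 1 = rev g2 0) by (unfold rev; replace (1 - 0) with 1 by ring; congruence).
  pose proof (concat_path Om g1 (rev g2) P1 P2' E) as [Cc Oc].
  pose proof (concat_lift Om a b g1 (rev g2) _ _ P1 P2' E L1 (rev_lift Om a b g2 p2 L2)) as L.
  destruct (Hsc (concat g1 (rev g2)) (ccont_cont_on _ Cc) Oc) as [H [HH1 [HH2 [HH3 [HH4 HH5]]]]].
  { unfold concat, rev. destruct (Rle_dec 0 (1/2)); [|lra]. destruct (Rle_dec 1 (1/2)); [lra|].
    replace (2 * 0) with 0 by ring. replace (1 - (2 * 1 - 1)) with 0 by ring. congruence. }
  pose proof (loop_zero Om a b _ _ H Ho Hcf Cc (cont_on_hcont H HH1) HH2 HH3 HH4 HH5 L) as Z.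
  simpl in Z. destruct (Rle_dec 1 (1/2)); [lra|]. destruct (Rle_dec 0 (1/2)); [|lra].
  replace (1 - (2 * 1 - 1)) with 0 in Z by ring. replace (2 * 0) with 0 in Z by ring.
  replace (1 - 0) with 1 in Z by ring. lra.
Qed.

Open Scope R_scope.

Definition seg (z w : C) : R -> C :=
  fun t => (fst z + t * (fst w - fst z), snd z + t * (snd w - snd z)).

Lemma lin_small (t s k e : R) : 0 < e -> Rabs (s - t) < e / (Rabs k + 1) ->
  Rabs (s * k - t * k) < e.
Proof.
  intros He H. replace (s * k - t * k) with ((s - t) * k) by ring. rewrite Rabs_mult.
  pose proof (Rabs_pos k). pose proof (Rabs_pos (s - t)).
  apply Rle_lt_trans with (Rabs (s - t) * (Rabs k + 1)). nra.
  apply Rmult_lt_reg_r with (/ (Rabs k + 1)). apply Rinv_0_lt_compat. lra.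
  rewrite Rmult_assoc, Rinv_r by lra. rewrite Rmult_1_r. unfold Rdiv in H. lra.
Qed.

Lemma seg_ccont z w : ccont 0 1 (seg z w).
Proof.
  intros t Ht e.
  set (k := Rabs (fst w - fst z) + Rabs (snd w - snd z)).
  assert (Hp : 0 < e / (k + 1)).
  { apply Rdiv_lt_0_compat. apply cond_pos. unfold k. pose proof (Rabs_pos (fst w - fst z)). pose proof (Rabs_pos (snd w - snd z)). lra. }
  exists (mkposreal _ Hp). intros s Hs Hst. simpl in Hst. unfold seg. split; simpl.
  - replace (fst z + s * (fst w - fst z) - (fst z + t * (fst w - fst z))) with
      (s * (fst w - fst z) - t * (fst w - fst z)) by ring.
    apply lin_small. apply cond_pos.
    eapply Rlt_le_trans; [exact Hst|]. apply Rmult_le_compat_l. apply Rlt_le, cond_pos.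
    apply Rinv_le_contravar. pose proof (Rabs_pos (fst w - fst z)). lra.
    unfold k. pose proof (Rabs_pos (snd w - snd z)). lra.
  - replace (snd z + s * (snd w - snd z) - (snd z + t * (snd w - snd z))) with
      (s * (snd w - snd z) - t * (snd w - snd z)) by ring.
    apply lin_small. apply cond_pos.
    eapply Rlt_le_trans; [exact Hst|]. apply Rmult_le_compat_l. apply Rlt_le, cond_pos.
    apply Rinv_le_contravar. pose proof (Rabs_pos (snd w - snd z)). lra.
    unfold k. pose proof (Rabs_pos (fst w - fst z)). lra.
Qed.

Lemma seg_in z w r s : sq z r w -> 0 <= s <= 1 -> sq z r (seg z w s).
Proof.
  intros [H1 H2] Hs. unfold seg. split; simpl.
  - replace (fst z + s * (fst w - fst z) - fst z) with (s * (fst w - fst z)) by ring.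
    rewrite Rabs_mult, (Rabs_pos_eq s) by lra. pose proof (Rabs_pos (fst w - fst z)). nra.
  - replace (snd z + s * (snd w - snd z) - snd z) with (s * (snd w - snd z)) by ring.
    rewrite Rabs_mult, (Rabs_pos_eq s) by lra. pose proof (Rabs_pos (snd w - snd z)). nra.
Qed.

Lemma seg0 z w : seg z w 0 = z.
Proof. destruct z; unfold seg; simpl; f_equal; ring. Qed.
Lemma seg1 z w : seg z w 1 = w.
Proof. destruct z, w; unfold seg; simpl; f_equal; ring. Qed.

Theorem poincare Om a b : simply_connected_domain Om -> closed_form Om a b ->
  exists Q, prim Om a b Q.
Proof.
  intros SC Hcf. pose proof SC as [[[z0 Hz0] [Ho Hpc]] _].
  set (S := fun z v => exists g p, is_path Om g /\ g 0 = z0 /\ g 1 = z /\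
                          liftI Om a b 0 1 g p /\ p 0 = 0 /\ p 1 = v).
  assert (HS : forall z, exists v, Om z -> S z v).
  { intros z. destruct (classic (Om z)) as [Hz|Hz]; [|exists 0; intros; contradiction].
    destruct (Hpc z0 z Hz0 Hz) as [g [Hg1 [Hg2 [Hg3 Hg4]]]].
    assert (Pg : is_path Om g) by (split; [apply cont_on_ccont; auto | auto]).
    destruct (lift_exists Om a b 0 1 g Ho Hcf ltac:(lra) (proj1 Pg) (proj2 Pg)) as [p [Hp Hp0]].
    exists (p 1). intros _. exists g, p. refine (conj Pg (conj Hg3 (conj Hg4 (conj Hp (conj Hp0 eq_refl))))). }
  destruct (choose_fun (fun z v => Om z -> S z v) (inhabits 0) HS) as [Q HQ].
  exists Q. intros z Hz.
  destruct (open_sq Om z Ho Hz) as [r Hr].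
  destruct (adm_exists Om a b z r Ho Hcf (cond_pos r) Hr) as [G HG].
  assert (Key : forall w, sq z r w -> Q w = Q z + G w - G z).
  { intros w Hw.
    destruct (HQ z Hz) as [g [p [Pg [G0 [G1 [Lp [P0 P1]]]]]]].
    assert (Ps : is_path Om (seg z w)).
    { split. apply seg_ccont. intros s Hs. apply Hr. apply seg_in; auto. }
    assert (E : g 1 = seg z w 0) by (rewrite seg0; auto).
    assert (Ls : liftI Om a b 0 1 (seg z w) (fun t => G (seg z w t) + (p 1 - G z))).
    { apply (lift_single Om a b 0 1 (seg z w) z r G (p 1 - G z) HG). intros s Hs. apply seg_in; auto. }
    pose proof (concat_lift Om a b g (seg z w) _ _ Pg Ps E Lp Ls) as L.
    pose proof (concat_path Om g (seg z w) Pg Ps E) as Pc.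
    assert (Hw' : Om w) by (apply Hr; auto).
    destruct (HQ w Hw') as [g' [p' [Pg' [G0' [G1' [Lp' [P0' P1']]]]]]].
    assert (C0 : concat g (seg z w) 0 = z0).
    { unfold concat. destruct (Rle_dec 0 (1/2)); [|lra]. replace (2 * 0) with 0 by ring. auto. }
    assert (C1 : concat g (seg z w) 1 = w).
    { unfold concat. destruct (Rle_dec 1 (1/2)); [lra|]. replace (2 * 1 - 1) with 1 by ring. apply seg1. }
    assert (V0 : (fun t : R => if Rle_dec t (1 / 2) then p (2 * t) else
        (fun t0 : R => G (seg z w t0) + (p 1 - G z)) (2 * t - 1) +
        (p 1 - (fun t0 : R => G (seg z w t0) + (p 1 - G z)) 0)) 0 = 0).
    { cbv beta. destruct (Rle_dec 0 (1/2)); [|lra]. replace (2 * 0) with 0 by ring. auto. }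
    pose proof (path_wd Om a b z0 w g' (concat g (seg z w)) p' _ SC Hcf Pg' Pc G0' C0 G1' C1 Lp' L P0' V0) as W.
    cbv beta in W. destruct (Rle_dec 1 (1/2)); [lra|].
    replace (2 * 1 - 1) with 1 in W by ring.
    rewrite seg0, seg1 in W.
    rewrite <- P1', W, P1. ring. }
  destruct HG as [_ [_ PG]]. destruct (PG z (sq_refl' z r (cond_pos r))) as [Du Dv].
  pose proof (locally_sq_C z r z (sq_refl' z r (cond_pos r))) as Hl.
  split.
  - apply (is_derive_ext_loc (fun t => G (t, snd z) + (Q z - G z))).
    + apply locally_R_line_u in Hl. eapply filter_imp; [|exact Hl].
      intros t Ht. simpl in Ht. cbv beta. pose proof (Key (@pair R R t (snd z)) Ht) as K. change (G (@pair R R t (snd z)) + (Q z - G z) = Q (@pair R R t (snd z))). rewrite K. ring.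
    + replace (a z) with (a z + 0) by ring. apply (is_derive_plus (fun t => G (t, snd z)) (fun _ => Q z - G z)).
      auto. apply (is_derive_const (K:=R_AbsRing) (V:=R_NormedModule)).
  - apply (is_derive_ext_loc (fun t => G (fst z, t) + (Q z - G z))).
    + apply locally_R_line_v in Hl. eapply filter_imp; [|exact Hl].
      intros t Ht. simpl in Ht. cbv beta. pose proof (Key (@pair R R (fst z) t) Ht) as K. change (G (@pair R R (fst z) t) + (Q z - G z) = Q (@pair R R (fst z) t)). rewrite K. ring.
    + replace (b z) with (b z + 0) by ring. apply (is_derive_plus (fun t => G (fst z, t)) (fun _ => Q z - G z)).
      auto. apply (is_derive_const (K:=R_AbsRing) (V:=R_NormedModule)).
Qed.

Open Scope R_scope.

Definition D1 (Om : C -> Prop) (f : C -> R) : Prop :=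
  forall z, Om z -> ex_derive (fun t => f (t, snd z)) (fst z) /\
    ex_derive (fun t => f (fst z, t)) (snd z) /\
    continuous f z /\ continuous (pu f) z /\ continuous (pv f) z.

Lemma cont_ext_loc (f g : C -> R) z :
  locally z (fun w => f w = g w) -> continuous f z -> continuous g z.
Proof.
  intros Hl Hc. assert (E : f z = g z) by (apply locally_singleton in Hl; exact Hl).
  unfold continuous. rewrite <- E. apply (filterlim_ext_loc f g); auto.
Qed.

Lemma pu_ext_loc (f g : C -> R) z : locally z (fun w => f w = g w) -> pu f z = pu g z.
Proof.
  intros Hl. unfold pu. apply Derive_ext_loc. apply (locally_R_line_u z (fun w => f w = g w)) in Hl.
  exact Hl.
Qed.

Lemma pv_ext_loc (f g : C -> R) z : locally z (fun w => f w = g w) -> pv f z = pv g z.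
Proof.
  intros Hl. unfold pv. apply Derive_ext_loc. apply (locally_R_line_v z (fun w => f w = g w)) in Hl.
  exact Hl.
Qed.

Lemma open_loc (Om : C -> Prop) (P : C -> Prop) z : open Om -> Om z -> (forall w, Om w -> P w) -> locally z P.
Proof. intros Ho Hz H. eapply filter_imp; [|exact (Ho z Hz)]. auto. Qed.

Lemma D1_ext Om f g : open Om -> (forall w, Om w -> f w = g w) -> D1 Om f -> D1 Om g.
Proof.
  intros Ho E H z Hz. destruct (H z Hz) as [D1u [D1v [Cf [Cu Cv]]]].
  assert (L : locally z (fun w => f w = g w)) by (apply (open_loc Om); auto).
  repeat split.
  - apply (ex_derive_ext_loc (fun t => f (t, snd z))); auto.
    apply (locally_R_line_u z (fun w => f w = g w)). auto.
  - apply (ex_derive_ext_loc (fun t => f (fst z, t))); auto.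
    apply (locally_R_line_v z (fun w => f w = g w)). auto.
  - apply (cont_ext_loc f); auto.
  - apply (cont_ext_loc (pu f)); auto. apply (open_loc Om); auto.
    intros w Hw. apply pu_ext_loc. apply (open_loc Om); auto.
  - apply (cont_ext_loc (pv f)); auto. apply (open_loc Om); auto.
    intros w Hw. apply pv_ext_loc. apply (open_loc Om); auto.
Qed.

Lemma pu_const c z : pu (fun _ => c) z = 0.
Proof. unfold pu. apply Derive_const. Qed.
Lemma pv_const c z : pv (fun _ => c) z = 0.
Proof. unfold pv. apply Derive_const. Qed.

Lemma cont_const (c : R) z : continuous (fun _ : C => c) z.
Proof. apply continuous_const. Qed.

Lemma D1_const Om c : D1 Om (fun _ => c).
Proof.
  intros z Hz. repeat split.
  - apply ex_derive_const.
  - apply ex_derive_const.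
  - apply cont_const.
  - apply (cont_ext_loc (fun _ => 0)). apply filter_forall. intros w. rewrite pu_const. auto. apply cont_const.
  - apply (cont_ext_loc (fun _ => 0)). apply filter_forall. intros w. rewrite pv_const. auto. apply cont_const.
Qed.

Lemma cont_mult (f g : C -> R) z : continuous f z -> continuous g z -> continuous (fun w => f w * g w) z.
Proof. intros H1 H2. apply (continuous_mult f g); auto. Qed.
Lemma cont_plus (f g : C -> R) z : continuous f z -> continuous g z -> continuous (fun w => f w + g w) z.
Proof. intros H1 H2. apply (continuous_plus f g); auto. Qed.

Lemma pu_mult f g z : ex_derive (fun t => f (t, snd z)) (fst z) -> ex_derive (fun t => g (t, snd z)) (fst z) ->
  pu (fun w => f w * g w) z = pu f z * g z + f z * pu g z.
Proof.
  intros H1 H2. unfold pu. rewrite (Derive_mult (fun t => f (t, snd z)) (fun t => g (t, snd z))); auto.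
  destruct z; reflexivity.
Qed.
Lemma pv_mult f g z : ex_derive (fun t => f (fst z, t)) (snd z) -> ex_derive (fun t => g (fst z, t)) (snd z) ->
  pv (fun w => f w * g w) z = pv f z * g z + f z * pv g z.
Proof.
  intros H1 H2. unfold pv. rewrite (Derive_mult (fun t => f (fst z, t)) (fun t => g (fst z, t))); auto.
  destruct z; reflexivity.
Qed.
Lemma pu_plus f g z : ex_derive (fun t => f (t, snd z)) (fst z) -> ex_derive (fun t => g (t, snd z)) (fst z) ->
  pu (fun w => f w + g w) z = pu f z + pu g z.
Proof.
  intros H1 H2. unfold pu. rewrite (Derive_plus (fun t => f (t, snd z)) (fun t => g (t, snd z))); auto.
Qed.
Lemma pv_plus f g z : ex_derive (fun t => f (fst z, t)) (snd z) -> ex_derive (fun t => g (fst z, t)) (snd z) ->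
  pv (fun w => f w + g w) z = pv f z + pv g z.
Proof.
  intros H1 H2. unfold pv. rewrite (Derive_plus (fun t => f (fst z, t)) (fun t => g (fst z, t))); auto.
Qed.

Lemma D1_mult Om f g : open Om -> D1 Om f -> D1 Om g -> D1 Om (fun w => f w * g w).
Proof.
  intros Ho Hf Hg z Hz.
  destruct (Hf z Hz) as [F1 [F2 [F3 [F4 F5]]]]. destruct (Hg z Hz) as [G1 [G2 [G3 [G4 G5]]]].
  repeat split.
  - apply (ex_derive_mult (fun t => f (t, snd z)) (fun t => g (t, snd z))); auto.
  - apply (ex_derive_mult (fun t => f (fst z, t)) (fun t => g (fst z, t))); auto.
  - apply cont_mult; auto.
  - apply (cont_ext_loc (fun w => pu f w * g w + f w * pu g w)).
    + apply (open_loc Om); auto. intros w Hw. destruct (Hf w Hw) as [? _]. destruct (Hg w Hw) as [? _].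
      symmetry. apply pu_mult; auto.
    + apply cont_plus; apply cont_mult; auto.
  - apply (cont_ext_loc (fun w => pv f w * g w + f w * pv g w)).
    + apply (open_loc Om); auto. intros w Hw. destruct (Hf w Hw) as [_ [? _]]. destruct (Hg w Hw) as [_ [? _]].
      symmetry. apply pv_mult; auto.
    + apply cont_plus; apply cont_mult; auto.
Qed.

Lemma D1_plus Om f g : open Om -> D1 Om f -> D1 Om g -> D1 Om (fun w => f w + g w).
Proof.
  intros Ho Hf Hg z Hz.
  destruct (Hf z Hz) as [F1 [F2 [F3 [F4 F5]]]]. destruct (Hg z Hz) as [G1 [G2 [G3 [G4 G5]]]].
  repeat split.
  - apply (ex_derive_plus (fun t => f (t, snd z)) (fun t => g (t, snd z))); auto.
  - apply (ex_derive_plus (fun t => f (fst z, t)) (fun t => g (fst z, t))); auto.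
  - apply cont_plus; auto.
  - apply (cont_ext_loc (fun w => pu f w + pu g w)).
    + apply (open_loc Om); auto. intros w Hw. destruct (Hf w Hw) as [? _]. destruct (Hg w Hw) as [? _].
      symmetry. apply pu_plus; auto.
    + apply cont_plus; auto.
  - apply (cont_ext_loc (fun w => pv f w + pv g w)).
    + apply (open_loc Om); auto. intros w Hw. destruct (Hf w Hw) as [_ [? _]]. destruct (Hg w Hw) as [_ [? _]].
      symmetry. apply pv_plus; auto.
    + apply cont_plus; auto.
Qed.

Lemma cont_inv (f : C -> R) z : continuous f z -> f z <> 0 -> continuous (fun w => / f w) z.
Proof.
  intros Hc Hn. apply (continuous_comp f (fun x => / x)); auto.
  apply (ex_derive_continuous (K:=R_AbsRing) (V:=R_NormedModule)).
  apply (ex_derive_inv (fun x => x)); auto. apply (ex_derive_id (K:=R_AbsRing)).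
Qed.

Lemma pu_inv f z : ex_derive (fun t => f (t, snd z)) (fst z) -> f z <> 0 ->
  pu (fun w => / f w) z = - pu f z * (/ f z * / f z).
Proof.
  intros H1 H2. unfold pu. rewrite (Derive_inv (fun t => f (t, snd z))); auto.
  destruct z; simpl. field. auto. destruct z; auto.
Qed.
Lemma pv_inv f z : ex_derive (fun t => f (fst z, t)) (snd z) -> f z <> 0 ->
  pv (fun w => / f w) z = - pv f z * (/ f z * / f z).
Proof.
  intros H1 H2. unfold pv. rewrite (Derive_inv (fun t => f (fst z, t))); auto.
  destruct z; simpl. field. auto. destruct z; auto.
Qed.

Lemma D1_inv Om f : open Om -> (forall w, Om w -> f w <> 0) -> D1 Om f -> D1 Om (fun w => / f w).
Proof.
  intros Ho Hn Hf z Hz.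
  destruct (Hf z Hz) as [F1 [F2 [F3 [F4 F5]]]].
  assert (Hz0 := Hn z Hz).
  repeat split.
  - apply (ex_derive_inv (fun t => f (t, snd z))); auto. destruct z; auto.
  - apply (ex_derive_inv (fun t => f (fst z, t))); auto. destruct z; auto.
  - apply cont_inv; auto.
  - apply (cont_ext_loc (fun w => - pu f w * (/ f w * / f w))).
    + apply (open_loc Om); auto. intros w Hw. destruct (Hf w Hw) as [? _].
      symmetry. apply pu_inv; auto.
    + apply (cont_ext_loc (fun w => (-1 * pu f w) * (/ f w * / f w))).
      apply filter_forall. intros; ring.
      apply cont_mult. apply cont_mult; auto. apply cont_const. apply cont_mult; apply cont_inv; auto.
  - apply (cont_ext_loc (fun w => - pv f w * (/ f w * / f w))).
    + apply (open_loc Om); auto. intros w Hw. destruct (Hf w Hw) as [_ [? _]].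
      symmetry. apply pv_inv; auto.
    + apply (cont_ext_loc (fun w => (-1 * pv f w) * (/ f w * / f w))).
      apply filter_forall. intros; ring.
      apply cont_mult. apply cont_mult; auto. apply cont_const. apply cont_mult; apply cont_inv; auto.
Qed.

Definition C2 (Om : C -> Prop) (f : C -> R) : Prop := D1 Om f /\ D1 Om (pu f) /\ D1 Om (pv f).

Lemma C2_of Om f : C2_on_R Om f -> C2 Om f.
Proof.
  intros H. split; [|split]; intros z Hz; destruct (H z Hz) as [A1 [A2 [A3 [A4 [A5 [A6 [A7 [A8 [A9 [A10 [A11 [A12 A13]]]]]]]]]]]];
  repeat split; auto.
Qed.

Lemma C2_to Om f : C2 Om f -> C2_on_R Om f.
Proof.
  intros [H1 [H2 H3]] z Hz. destruct (H1 z Hz) as [A1 [A2 [A3 [A4 A5]]]].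
  destruct (H2 z Hz) as [B1 [B2 [B3 [B4 B5]]]]. destruct (H3 z Hz) as [C1 [C2' [C3 [C4 C5]]]].
  repeat split; auto.
Qed.

Lemma C2_ext Om f g : open Om -> (forall w, Om w -> f w = g w) -> C2 Om f -> C2 Om g.
Proof.
  intros Ho E [H1 [H2 H3]]. split; [|split].
  - apply (D1_ext Om f); auto.
  - apply (D1_ext Om (pu f)); auto. intros w Hw. apply pu_ext_loc. apply (open_loc Om); auto.
  - apply (D1_ext Om (pv f)); auto. intros w Hw. apply pv_ext_loc. apply (open_loc Om); auto.
Qed.

Lemma C2_const Om c : open Om -> C2 Om (fun _ => c).
Proof.
  intros Ho. split; [|split]. apply D1_const.
  apply (D1_ext Om (fun _ => 0)); auto. intros; rewrite pu_const; auto. apply D1_const.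
  apply (D1_ext Om (fun _ => 0)); auto. intros; rewrite pv_const; auto. apply D1_const.
Qed.

Lemma C2_mult Om f g : open Om -> C2 Om f -> C2 Om g -> C2 Om (fun w => f w * g w).
Proof.
  intros Ho [F1 [F2 F3]] [G1 [G2 G3]]. split; [|split].
  - apply D1_mult; auto.
  - apply (D1_ext Om (fun w => pu f w * g w + f w * pu g w)); auto.
    + intros w Hw. destruct (F1 w Hw) as [? _]. destruct (G1 w Hw) as [? _]. symmetry. apply pu_mult; auto.
    + apply D1_plus; auto; apply D1_mult; auto.
  - apply (D1_ext Om (fun w => pv f w * g w + f w * pv g w)); auto.
    + intros w Hw. destruct (F1 w Hw) as [_ [? _]]. destruct (G1 w Hw) as [_ [? _]]. symmetry. apply pv_mult; auto.
    + apply D1_plus; auto; apply D1_mult; auto.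
Qed.

Lemma C2_plus Om f g : open Om -> C2 Om f -> C2 Om g -> C2 Om (fun w => f w + g w).
Proof.
  intros Ho [F1 [F2 F3]] [G1 [G2 G3]]. split; [|split].
  - apply D1_plus; auto.
  - apply (D1_ext Om (fun w => pu f w + pu g w)); auto.
    + intros w Hw. destruct (F1 w Hw) as [? _]. destruct (G1 w Hw) as [? _]. symmetry. apply pu_plus; auto.
    + apply D1_plus; auto.
  - apply (D1_ext Om (fun w => pv f w + pv g w)); auto.
    + intros w Hw. destruct (F1 w Hw) as [_ [? _]]. destruct (G1 w Hw) as [_ [? _]]. symmetry. apply pv_plus; auto.
    + apply D1_plus; auto.
Qed.

Lemma C2_inv Om f : open Om -> (forall w, Om w -> f w <> 0) -> C2 Om f -> C2 Om (fun w => / f w).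
Proof.
  intros Ho Hn [F1 [F2 F3]].
  assert (I1 : D1 Om (fun w => / f w)) by (apply D1_inv; auto).
  split; [|split]; auto.
  - apply (D1_ext Om (fun w => (-1 * pu f w) * ((/ f w) * (/ f w)))); auto.
    + intros w Hw. destruct (F1 w Hw) as [? _]. rewrite pu_inv; auto. ring.
    + apply D1_mult; auto. apply D1_mult; auto. apply D1_const. apply D1_mult; auto.
  - apply (D1_ext Om (fun w => (-1 * pv f w) * ((/ f w) * (/ f w)))); auto.
    + intros w Hw. destruct (F1 w Hw) as [_ [? _]]. rewrite pv_inv; auto. ring.
    + apply D1_mult; auto. apply D1_mult; auto. apply D1_const. apply D1_mult; auto.
Qed.

Open Scope R_scope.

Lemma Ceq (x y : C) : fst x = fst y -> snd x = snd y -> x = y.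
Proof. destruct x, y; simpl; intros; subst; auto. Qed.

Ltac csolve := apply Ceq; unfold Re, Im; simpl; field; try (split; lra); try lra.

Lemma dzb_formula F z : dzb F z =
  ((pu (fun w => Re (F w)) z - pv (fun w => Im (F w)) z) / 2,
   (pu (fun w => Im (F w)) z + pv (fun w => Re (F w)) z) / 2).
Proof. unfold dzb, Cpu, Cpv. csolve. Qed.

Lemma dz_formula F z : dz F z =
  ((pu (fun w => Re (F w)) z + pv (fun w => Im (F w)) z) / 2,
   (pu (fun w => Im (F w)) z - pv (fun w => Re (F w)) z) / 2).
Proof. unfold dz, Cpu, Cpv. csolve. Qed.

Lemma dz_toC f z : dz (toC f) z = (pu f z / 2, - pv f z / 2).
Proof.
  rewrite dz_formula.
  change (fun w => Re (toC f w)) with f. change (fun w => Im (toC f w)) with (fun _ : C => 0).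
  rewrite pu_const, pv_const. csolve.
Qed.

Definition CD1 (Om : C -> Prop) (F : C -> C) : Prop :=
  D1 Om (fun w => Re (F w)) /\ D1 Om (fun w => Im (F w)).

Lemma CD1_mult Om F G : open Om -> CD1 Om F -> CD1 Om G -> CD1 Om (fun w => (F w * G w)%C).
Proof.
  intros Ho [F1 F2] [G1 G2]. split.
  - apply (D1_ext Om (fun w => Re (F w) * Re (G w) + (-1) * (Im (F w) * Im (G w)))); [auto| |].
    + intros w _. unfold Re, Im; simpl; ring.
    + apply D1_plus; auto. apply D1_mult; auto. apply D1_mult; auto. apply D1_const. apply D1_mult; auto.
  - apply (D1_ext Om (fun w => Re (F w) * Im (G w) + Im (F w) * Re (G w))); [auto| |].
    + intros w _. unfold Re, Im; simpl; ring.
    + apply D1_plus; auto; apply D1_mult; auto.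
Qed.

Lemma CD1_plus Om F G : open Om -> CD1 Om F -> CD1 Om G -> CD1 Om (fun w => (F w + G w)%C).
Proof.
  intros Ho [F1 F2] [G1 G2]. split.
  - apply (D1_ext Om (fun w => Re (F w) + Re (G w))); auto. apply D1_plus; auto.
  - apply (D1_ext Om (fun w => Im (F w) + Im (G w))); auto. apply D1_plus; auto.
Qed.

Lemma CD1_minus Om F G : open Om -> CD1 Om F -> CD1 Om G -> CD1 Om (fun w => (F w - G w)%C).
Proof.
  intros Ho [F1 F2] [G1 G2]. split.
  - apply (D1_ext Om (fun w => Re (F w) + (-1) * Re (G w))); auto. intros w _. unfold Re, Im; simpl; ring.
    apply D1_plus; auto. apply D1_mult; auto. apply D1_const.
  - apply (D1_ext Om (fun w => Im (F w) + (-1) * Im (G w))); auto. intros w _. unfold Re, Im; simpl; ring.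
    apply D1_plus; auto. apply D1_mult; auto. apply D1_const.
Qed.

Lemma CD1_const Om c : CD1 Om (fun _ => c).
Proof. split; apply D1_const. Qed.

Lemma pu_minus f g z : ex_derive (fun t => f (t, snd z)) (fst z) -> ex_derive (fun t => g (t, snd z)) (fst z) ->
  pu (fun w => f w - g w) z = pu f z - pu g z.
Proof. intros H1 H2. unfold pu. rewrite (Derive_minus (fun t => f (t, snd z)) (fun t => g (t, snd z))); auto. Qed.
Lemma pv_minus f g z : ex_derive (fun t => f (fst z, t)) (snd z) -> ex_derive (fun t => g (fst z, t)) (snd z) ->
  pv (fun w => f w - g w) z = pv f z - pv g z.
Proof. intros H1 H2. unfold pv. rewrite (Derive_minus (fun t => f (fst z, t)) (fun t => g (fst z, t))); auto. Qed.

Lemma dzb_mult Om F G z : CD1 Om F -> CD1 Om G -> Om z ->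
  dzb (fun w => (F w * G w)%C) z = (dzb F z * G z + F z * dzb G z)%C.
Proof.
  intros [F1 F2] [G1 G2] Hz.
  destruct (F1 z Hz) as [a1 [a2 _]]. destruct (F2 z Hz) as [b1 [b2 _]].
  destruct (G1 z Hz) as [c1 [c2 _]]. destruct (G2 z Hz) as [d1 [d2 _]].
  rewrite !dzb_formula.
  change (fun w => Re (F w * G w)%C) with (fun w => Re (F w) * Re (G w) - Im (F w) * Im (G w)).
  change (fun w => Im (F w * G w)%C) with (fun w => Re (F w) * Im (G w) + Im (F w) * Re (G w)).
  rewrite (pu_minus (fun w => Re (F w) * Re (G w)) (fun w => Im (F w) * Im (G w))).
  rewrite (pv_minus (fun w => Re (F w) * Re (G w)) (fun w => Im (F w) * Im (G w))).
  rewrite (pu_plus (fun w => Re (F w) * Im (G w)) (fun w => Im (F w) * Re (G w))).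
  rewrite (pv_plus (fun w => Re (F w) * Im (G w)) (fun w => Im (F w) * Re (G w))).
  rewrite !pu_mult, !pv_mult; auto.
  csolve.
  all: apply ex_derive_mult; auto.
Qed.

Lemma dzb_minus Om F G z : CD1 Om F -> CD1 Om G -> Om z ->
  dzb (fun w => (F w - G w)%C) z = (dzb F z - dzb G z)%C.
Proof.
  intros [F1 F2] [G1 G2] Hz.
  destruct (F1 z Hz) as [a1 [a2 _]]. destruct (F2 z Hz) as [b1 [b2 _]].
  destruct (G1 z Hz) as [c1 [c2 _]]. destruct (G2 z Hz) as [d1 [d2 _]].
  rewrite !dzb_formula.
  change (fun w => Re (F w - G w)%C) with (fun w => Re (F w) - Re (G w)).
  change (fun w => Im (F w - G w)%C) with (fun w => Im (F w) - Im (G w)).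
  rewrite !pu_minus, !pv_minus; auto. csolve.
Qed.

Lemma dzb_const (c : C) z : dzb (fun _ => c) z = 0%C.
Proof. rewrite dzb_formula. rewrite !pu_const, !pv_const. csolve. Qed.

Lemma dzb_ext Om F G z : open Om -> Om z -> (forall w, Om w -> F w = G w) -> dzb F z = dzb G z.
Proof.
  intros Ho Hz E. rewrite !dzb_formula.
  rewrite (pu_ext_loc (fun w => Re (F w)) (fun w => Re (G w))), (pu_ext_loc (fun w => Im (F w)) (fun w => Im (G w))),
          (pv_ext_loc (fun w => Re (F w)) (fun w => Re (G w))), (pv_ext_loc (fun w => Im (F w)) (fun w => Im (G w))).
  reflexivity.
  all: apply (open_loc Om); auto; intros w Hw; rewrite E; auto.
Qed.

Lemma pu_scal k f z : pu (fun w => k * f w) z = k * pu f z.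
Proof. unfold pu. apply Derive_scal. Qed.
Lemma pv_scal k f z : pv (fun w => k * f w) z = k * pv f z.
Proof. unfold pv. apply Derive_scal. Qed.

Lemma D1_C2 Om f : C2 Om f -> D1 Om f.
Proof. intros [H _]; auto. Qed.
Lemma D1_C2u Om f : C2 Om f -> D1 Om (pu f).
Proof. intros [_ [H _]]; auto. Qed.
Lemma D1_C2v Om f : C2 Om f -> D1 Om (pv f).
Proof. intros [_ [_ H]]; auto. Qed.

Lemma schwarz_C2 Om f z : open Om -> C2_on_R Om f -> Om z -> pv (pu f) z = pu (pv f) z.
Proof.
  intros Ho Hf Hz. destruct z as [x y].
  destruct (open_sq Om (x, y) Ho Hz) as [r Hr].
  symmetry.
  pose proof (Schwarz (fun u v => f (u, v)) x y) as S.
  unfold pu, pv. simpl. apply S.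
  - exists r. intros u v Hu Hv. assert (Huv : Om (u, v)) by (apply Hr; split; simpl; auto).
    destruct (Hf _ Huv) as [A1 [A2 [A3 [A4 [A5 _]]]]]. simpl in *. repeat split; auto.
  - destruct (Hf _ Hz) as [_ [_ [_ [_ [_ [_ [_ [_ [_ [_ [_ [A12 _]]]]]]]]]]]].
    apply cont_2d in A12. exact A12.
  - destruct (Hf _ Hz) as [_ [_ [_ [_ [_ [_ [_ [_ [_ [_ [A11 _]]]]]]]]]]].
    apply cont_2d in A11. exact A11.
Qed.

Lemma mvt_bound (f df : R -> R) x y K :
  (forall t, Rmin x y <= t <= Rmax x y -> is_derive f t (df t) /\ Rabs (df t) <= K) ->
  Rabs (f y - f x) <= K * Rabs (y - x).
Proof.
  intros H. destruct (MVT_gen f x y df) as [c [Hc E]].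
  - intros t Ht. apply H. split; apply Rlt_le; apply Ht.
  - intros t Ht. apply continuity_pt_filterlim.
    apply (ex_derive_continuous (K:=R_AbsRing) (V:=R_NormedModule)). exists (df t). apply H. auto.
  - rewrite E, Rabs_mult. apply Rmult_le_compat_r. apply Rabs_pos. apply H. auto.
Qed.

Lemma prim_cont Om a b Q z : open Om -> prim Om a b Q ->
  (forall w, Om w -> continuous a w /\ continuous b w) -> Om z -> continuous Q z.
Proof.
  intros Ho HP Hc Hz.
  destruct (open_sq Om z Ho Hz) as [r Hr].
  destruct (Hc z Hz) as [Ca Cb].
  destruct (cont_C_elim a z Ca (mkposreal 1 Rlt_0_1)) as [d1 Hd1].
  destruct (cont_C_elim b z Cb (mkposreal 1 Rlt_0_1)) as [d2 Hd2].
  set (rho := pmin r (pmin d1 d2)).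
  assert (R1 : rho <= r) by apply pmin_l.
  assert (R2 : rho <= d1) by (pose proof (pmin_r r (pmin d1 d2)); pose proof (pmin_l d1 d2); unfold rho; lra).
  assert (R3 : rho <= d2) by (pose proof (pmin_r r (pmin d1 d2)); pose proof (pmin_r d1 d2); unfold rho; lra).
  set (K := Rabs (a z) + Rabs (b z) + 1).
  assert (HK : 0 < K) by (unfold K; pose proof (Rabs_pos (a z)); pose proof (Rabs_pos (b z)); lra).
  assert (Bd : forall w, Rabs (fst w - fst z) < rho -> Rabs (snd w - snd z) < rho ->
            Om w /\ Rabs (a w) <= K /\ Rabs (b w) <= K).
  { intros w H1 H2. split. apply Hr. split; lra.
    pose proof (Hd1 w ltac:(lra) ltac:(lra)). pose proof (Hd2 w ltac:(lra) ltac:(lra)). simpl in *.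
    pose proof (Rabs_triang_inv (a w) (a z)). pose proof (Rabs_triang_inv (b w) (b z)).
    pose proof (Rabs_pos (a z)). pose proof (Rabs_pos (b z)). unfold K. split; lra. }
  apply cont_C_intro. intros eps.
  assert (He : 0 < eps / (2 * K)) by (apply Rdiv_lt_0_compat; [apply cond_pos | lra]).
  exists (pmin rho (mkposreal _ He)). intros w W1 W2.
  pose proof (pmin_l rho (mkposreal _ He)) as P1. pose proof (pmin_r rho (mkposreal _ He)) as P2. simpl in P2.
  destruct z as [x1 y1]. destruct w as [x2 y2]. simpl in *.
  assert (S1 : Rabs (Q (x2, y2) - Q (x1, y2)) <= K * Rabs (x2 - x1)).
  { apply (mvt_bound (fun t => Q (t, y2)) (fun t => a (t, y2))). intros t Ht.
    pose proof (between_abs x1 x2 t Ht).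
    destruct (Bd (t, y2)) as [O1 [B1 _]]; simpl; try lra.
    split; auto. apply (HP _ O1). }
  assert (S2 : Rabs (Q (x1, y2) - Q (x1, y1)) <= K * Rabs (y2 - y1)).
  { apply (mvt_bound (fun t => Q (x1, t)) (fun t => b (x1, t))). intros t Ht.
    pose proof (between_abs y1 y2 t Ht).
    destruct (Bd (x1, t)) as [O1 [_ B1]]; simpl; try lra.
    replace (x1 - x1) with 0 by ring. rewrite Rabs_R0. apply (posmin r (pmin d1 d2)).
    split; auto. apply (HP _ O1). }
  replace (Q (x2, y2) - Q (x1, y1)) with ((Q (x2, y2) - Q (x1, y2)) + (Q (x1, y2) - Q (x1, y1))) by ring.
  eapply Rle_lt_trans; [apply Rabs_triang|].
  assert (K * Rabs (x2 - x1) + K * Rabs (y2 - y1) < eps).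
  { apply Rlt_le_trans with (K * (eps / (2 * K)) + K * (eps / (2 * K))).
    - assert (Rabs (x2 - x1) < eps / (2 * K)) by lra. assert (Rabs (y2 - y1) < eps / (2 * K)) by lra. nra.
    - replace (K * (eps / (2 * K)) + K * (eps / (2 * K))) with (pos eps) by (field; lra). lra. }
  lra.
Qed.

Lemma h_nz (x : C) : x <> 0%C -> (fst x * fst x + snd x * snd x)%R <> 0%R.
Proof.
  intros H E. apply H. destruct x as [u v]. simpl in E.
  assert (u = 0%R) by nra. assert (v = 0%R) by nra. subst. reflexivity.
Qed.

Open Scope C_scope.

Theorem mainTheorem2 (Omega : C -> Prop) (h : C -> C) (M N : C -> R) :
  simply_connected_domain Omega ->
  WD_second Omega h M N ->
  let g : C -> C := fun z => / h z in
  let P : C -> R := fun z => (N z / 2)%R in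
  (exists Q : C -> R, C2_on_R Omega Q /\
     forall z, Omega z ->
       dz (toC Q) z = h z * dz (toC M) z - h z * h z / 2 * dz (toC N) z) /\
  (forall Q : C -> R, C2_on_R Omega Q ->
     (forall z, Omega z ->
       dz (toC Q) z = h z * dz (toC M) z - h z * h z / 2 * dz (toC N) z) ->
     WD_first Omega g P Q /\
     forall z, Omega z ->
       / Cconj (g z) * (dz (toC P) z - RtoC (Cmod (g z) ^ 2) * dz (toC Q) z)
       = - (dz (toC M) z - RtoC (Re (h z)) * dz (toC N) z)).
Proof.
  intros SC WD g P.
  pose proof SC as [[_ [Ho _]] _].
  destruct WD as [[Chr Chi] [CM [CN Hpt]]].
  apply C2_of in Chr. apply C2_of in Chi.
  pose proof (C2_of _ _ CM) as CM'. pose proof (C2_of _ _ CN) as CN'.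
  set (A := dz (toC M)) in *. set (B := dz (toC N)) in *.
  set (F := fun w => h w * A w - h w * h w / 2 * B w).
  assert (CDh : CD1 Omega h) by (split; apply D1_C2; auto).
  assert (CDA : CD1 Omega A).
  { split.
    - apply (D1_ext Omega (fun w => (/2 * pu M w)%R)); [auto| |].
      + intros w _. unfold A. rewrite dz_toC. unfold Re. simpl. field.
      + apply D1_mult; auto. apply D1_const. apply D1_C2u; auto.
    - apply (D1_ext Omega (fun w => (-/2 * pv M w)%R)); [auto| |].
      + intros w _. unfold A. rewrite dz_toC. unfold Im. simpl. field.
      + apply D1_mult; auto. apply D1_const. apply D1_C2v; auto. }
  assert (CDB : CD1 Omega B).
  { split.
    - apply (D1_ext Omega (fun w => (/2 * pu N w)%R)); [auto| |].
      + intros w _. unfold B. rewrite dz_toC. unfold Re. simpl. field.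
      + apply D1_mult; auto. apply D1_const. apply D1_C2u; auto.
    - apply (D1_ext Omega (fun w => (-/2 * pv N w)%R)); [auto| |].
      + intros w _. unfold B. rewrite dz_toC. unfold Im. simpl. field.
      + apply D1_mult; auto. apply D1_const. apply D1_C2v; auto. }
  assert (CDhh : CD1 Omega (fun w => h w * h w / 2)).
  { unfold Cdiv. apply CD1_mult; auto. apply CD1_mult; auto. apply CD1_const. }
  assert (CDF : CD1 Omega F).
  { unfold F. apply CD1_minus; auto. apply CD1_mult; auto. apply CD1_mult; auto. }
  set (Y := fun z => dzb B z).
  assert (dzbF : forall z, Omega z -> dzb F z = h z * (RtoC (Re (h z)) * Y z) - h z * h z / 2 * Y z).
  { intros z Hz. unfold F.
    rewrite (dzb_minus Omega (fun w => h w * A w) (fun w => h w * h w / 2 * B w)); auto.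
    2: apply CD1_mult; auto. 2: apply CD1_mult; auto.
    rewrite (dzb_mult Omega h A), (dzb_mult Omega (fun w => h w * h w / 2) B); auto.
    assert (E0 : dzb (fun w => h w * h w / 2) z = 0).
    { unfold Cdiv. rewrite (dzb_mult Omega (fun w => h w * h w) (fun _ => / 2)); auto.
      2: apply CD1_mult; auto. 2: apply CD1_const.
      rewrite (dzb_mult Omega h h); auto. rewrite dzb_const.
      destruct (Hpt z Hz) as [_ [Hh _]]. rewrite Hh. csolve. }
    rewrite E0. destruct (Hpt z Hz) as [_ [Hh [HX _]]]. rewrite Hh. rewrite HX.
    unfold Y. csolve. }
  assert (ReB : forall w, Re (B w) = (/2 * pu N w)%R).
  { intros w. unfold B. rewrite dz_toC. unfold Re. simpl. field. }
  assert (ImB : forall w, Im (B w) = (-/2 * pv N w)%R).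
  { intros w. unfold B. rewrite dz_toC. unfold Im. simpl. field. }
  assert (ImY : forall z, Omega z -> Im (Y z) = 0%R).
  { intros z Hz. unfold Y. rewrite dzb_formula. unfold Im at 1. simpl.
    rewrite (pu_ext_loc (fun w => Im (B w)) (fun w => (-/2 * pv N w)%R)) by (apply filter_forall; auto).
    rewrite (pv_ext_loc (fun w => Re (B w)) (fun w => (/2 * pu N w)%R)) by (apply filter_forall; auto).
    rewrite pu_scal, pv_scal. rewrite (schwarz_C2 Omega N z); auto. field. }
  split.
  - set (a := fun w => (2 * Re (F w))%R). set (b := fun w => (-2 * Im (F w))%R).
    pose proof CDF as [DFr DFi].
    assert (Da : D1 Omega a) by (apply D1_mult; auto; apply D1_const).
    assert (Db : D1 Omega b) by (apply D1_mult; auto; apply D1_const).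
    assert (Hcf : closed_form Omega a b).
    { intros z Hz. destruct (Da z Hz) as [a1 [a2 [a3 [a4 a5]]]]. destruct (Db z Hz) as [b1 [b2 [b3 [b4 b5]]]].
      repeat split; auto.
      unfold a, b. rewrite pv_scal, pu_scal.
      assert (Z : Im (dzb F z) = 0%R).
      { rewrite (dzbF z Hz). pose proof (ImY z Hz) as HY. destruct (Y z) as [y1 y2].
        unfold Im in HY. simpl in HY. subst y2. unfold Re, Im. simpl. field. }
      rewrite dzb_formula in Z. unfold Im at 1 in Z. cbn [snd] in Z.
      lra. }
    destruct (poincare Omega a b SC Hcf) as [Q HQ].
    assert (puQ : forall w, Omega w -> pu Q w = a w).
    { intros w Hw. destruct (HQ w Hw) as [D _]. unfold pu. apply is_derive_unique. exact D. }
    assert (pvQ : forall w, Omega w -> pv Q w = b w).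
    { intros w Hw. destruct (HQ w Hw) as [_ D]. unfold pv. apply is_derive_unique. exact D. }
    exists Q. split.
    + apply C2_to. split; [|split].
      * intros z Hz. destruct (HQ z Hz) as [Du Dv]. repeat split.
        -- exists (a z); exact Du.
        -- exists (b z); exact Dv.
        -- apply (prim_cont Omega a b Q z); auto. intros w Hw.
           destruct (Da w Hw) as [_ [_ [? _]]]; destruct (Db w Hw) as [_ [_ [? _]]]; auto.
        -- apply (cont_ext_loc a). apply (open_loc Omega); auto. intros; symmetry; auto.
           destruct (Da z Hz) as [_ [_ [? _]]]; auto.
        -- apply (cont_ext_loc b). apply (open_loc Omega); auto. intros; symmetry; auto.
           destruct (Db z Hz) as [_ [_ [? _]]]; auto.
      * apply (D1_ext Omega a); auto. intros; symmetry; auto.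
      * apply (D1_ext Omega b); auto. intros; symmetry; auto.
    + intros z Hz. rewrite dz_toC. rewrite puQ, pvQ by auto.
      change (h z * A z - h z * h z / 2 * B z) with (F z).
      unfold a, b. apply Ceq; unfold Re, Im; simpl; field.
  - intros Q CQ HdQ.
    assert (hnz : forall w, Omega w -> h w <> 0) by (intros w Hw; apply (Hpt w Hw)).
    assert (pqnz : forall w, Omega w -> (Re (h w) * Re (h w) + Im (h w) * Im (h w))%R <> 0%R).
    { intros w Hw. apply h_nz. auto. }
    assert (Cgr : C2 Omega (fun w => Re (g w))).
    { apply (C2_ext Omega (fun w => (Re (h w) * / (Re (h w) * Re (h w) + Im (h w) * Im (h w)))%R)); auto.
      - intros w Hw. pose proof (pqnz w Hw) as Hn. unfold g, Re, Im in *. simpl. field.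
        intro Hc; apply Hn; nra.
      - apply C2_mult; auto. apply C2_inv; auto. apply C2_plus; auto; apply C2_mult; auto. }
    assert (Cgi : C2 Omega (fun w => Im (g w))).
    { apply (C2_ext Omega (fun w => ((-1 * Im (h w)) * / (Re (h w) * Re (h w) + Im (h w) * Im (h w)))%R)); auto.
      - intros w Hw. pose proof (pqnz w Hw) as Hn. unfold g, Re, Im in *. simpl. field.
        intro Hc; apply Hn; nra.
      - apply C2_mult; auto. apply C2_mult; auto. apply C2_const; auto.
        apply C2_inv; auto. apply C2_plus; auto; apply C2_mult; auto. }
    assert (CDg : CD1 Omega g) by (split; apply D1_C2; auto).
    assert (puP : forall w, pu P w = (pu N w / 2)%R).
    { intros w. unfold pu, P, Rdiv. rewrite Derive_scal_l. reflexivity. }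
    assert (pvP : forall w, pv P w = (pv N w / 2)%R).
    { intros w. unfold pv, P, Rdiv. rewrite Derive_scal_l. reflexivity. }
    assert (dzP : forall w, dz (toC P) w = RtoC (/2) * B w).
    { intros w. rewrite dz_toC. unfold B. rewrite dz_toC. rewrite puP, pvP. csolve. }
    assert (Ident : forall z, Omega z ->
       / Cconj (g z) * (dz (toC P) z - RtoC (Cmod (g z) ^ 2) * dz (toC Q) z)
       = - (A z - RtoC (Re (h z)) * B z)).
    { intros z Hz. rewrite (HdQ z Hz), dzP. pose proof (pqnz z Hz) as Hn.
      unfold Cmod. rewrite pow2_sqrt by (apply Rplus_le_le_0_compat; apply pow2_ge_0).
      unfold g. destruct (h z) as [p q]. destruct (A z) as [a1 a2]. destruct (B z) as [b1 b2].
      unfold Re, Im in Hn. simpl in Hn.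
      apply Ceq; simpl; field; repeat split; try (intro Hc; apply Hn; nra). }
    split; [split; [|split; [|split]]|].
    + split; apply C2_to; auto.
    + apply C2_to. apply (C2_ext Omega (fun w => (N w * / 2)%R)); auto.
      apply C2_mult; auto. apply C2_const; auto.
    + exact CQ.
    + intros z Hz. split; [|split; [|split]].
      * unfold g. intro E. apply (hnz z Hz). rewrite <- (Cmult_1_r (h z)), <- (Cinv_l (h z)) by auto.
        rewrite E. rewrite Cmult_0_l, Cmult_0_r. reflexivity.
      * assert (E1 : dzb (fun w => g w * h w) z = dzb g z * h z + g z * dzb h z)
          by (apply (dzb_mult Omega); auto).
        assert (E2 : dzb (fun w => g w * h w) z = dzb (fun _ => 1) z).
        { apply (dzb_ext Omega); auto. intros w Hw. unfold g. apply Cinv_l. auto. }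
        rewrite dzb_const in E2. destruct (Hpt z Hz) as [_ [Hh _]]. rewrite Hh, Cmult_0_r in E1.
        rewrite E2 in E1.
        rewrite <- (Cmult_1_r (dzb g z)), <- (Cinv_r (h z)) by auto.
        rewrite Cmult_assoc. rewrite Cplus_0_r in E1. rewrite <- E1. apply Cmult_0_l.
      * rewrite (dzb_ext Omega (dz (toC Q)) F z); auto.
        rewrite (dzb_ext Omega (dz (toC P)) (fun w => RtoC (/2) * B w) z); auto.
        rewrite (dzb_mult Omega (fun _ => RtoC (/2)) B); auto. 2: apply CD1_const.
        rewrite dzb_const. rewrite (dzbF z Hz). fold (Y z).
        pose proof (pqnz z Hz) as Hn.
        unfold Cmod. rewrite pow2_sqrt by (apply Rplus_le_le_0_compat; apply pow2_ge_0).
        unfold g. destruct (h z) as [p q]. destruct (Y z) as [y1 y2]. destruct (B z) as [b1 b2].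
        unfold Re, Im in Hn. simpl in Hn.
        apply Ceq; simpl; field; repeat split; try (intro Hc; apply Hn; nra).
      * intro E0. pose proof (Ident z Hz) as I0. rewrite E0, Cmult_0_r in I0.
        destruct (Hpt z Hz) as [_ [_ [_ Hne]]]. apply Hne.
        apply Ceq; [apply (f_equal fst) in I0 | apply (f_equal snd) in I0]; simpl in *; lra.
    + exact Ident.
Qed.
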